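(* Let $M$ be a generic regular closed curve. If $\mathrm{CSS}(M)$ has an asymptote $L$, then $\mathrm{CSS}(M)$ approaches $L$ from opposite sides of $L$ and at opposite ends of $L$; that is, near $L$ the Centre Symmetry Set consists of two parts, lying on opposite sides of $L$, one tending to infinity along $L$ in one direction and the other in the opposite direction.
   Context: Generic means $M$ is the image of $f\in C^\infty(S^1,\mathbb{R}^2)$ which is regular, with only transversal self-crossings, only non-degenerate inflexion points and no undulation points, such that at least one point of each parallel pair is not an inflexion point, and satisfying further non-degeneracy conditions on parallel pairs which guarantee: the CSS is a union of smooth curves with at most cusp singularities, it has no double asymptotes (no two asymptotes coinciding as lines), and its curvature changes sign in a neighbourhood of each asymptote. Two distinct points of $M$ form a parallel pair if their tangent lines are parallel; $\mathrm{CSS}(M)$ is the envelope of lines through parallel pairs, locally parameterized near a parallel pair $a=f(s)$, $b=g(t(s))$ (local arc-length parameterizations with $f'(s)=-g'(t(s))$) by $\frac{\kappa_f(s)f(s)+\kappa_g(t(s))g(t(s))}{\kappa_f(s)+\kappa_g(t(s))}$; where $\kappa_f+\kappa_g=0$ the line through the pair is an asymptote. *)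

(* Defs.v *)
From Stdlib Require Import Reals ZArith.
From Coquelicot Require Import Coquelicot.
Open Scope R_scope.

Definition pt := (R * R)%type.
Definition padd (p q : pt) : pt := (fst p + fst q, snd p + snd q).
Definition psub (p q : pt) : pt := (fst p - fst q, snd p - snd q).
Definition pscal (c : R) (p : pt) : pt := (c * fst p, c * snd p).
Definition dot (p q : pt) : R := fst p * fst q + snd p * snd q.
Definition det (p q : pt) : R := fst p * snd q - snd p * fst q.
Definition vnorm (p : pt) : R := sqrt (dot p p).

(** A parametrized plane curve; closed curves are 1-periodic maps R -> R^2,
    i.e. maps S^1 = R/Z -> R^2. *)
Definition curve := R -> pt.

Definition smooth_curve (f : curve) : Prop :=
  forall (n : nat) (s : R),
    ex_derive_n (fun u => fst (f u)) n s /\ ex_derive_n (fun u => snd (f u)) n s.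

Definition closed_curve (f : curve) : Prop :=
  smooth_curve f /\ forall s, f (s + 1) = f s.

Definition d1 (f : curve) (s : R) : pt :=
  (Derive (fun u => fst (f u)) s, Derive (fun u => snd (f u)) s).
Definition d2 (f : curve) (s : R) : pt :=
  (Derive_n (fun u => fst (f u)) 2 s, Derive_n (fun u => snd (f u)) 2 s).

Definition regular (f : curve) : Prop := forall s, d1 f s <> (0, 0).

(** u and v represent the same point of S^1 = R/Z *)
Definition same_param (u v : R) : Prop := exists k : Z, v = u + IZR k.

(** signed curvature (w.r.t. the orientation of the parametrization) *)
Definition curvature (f : curve) (s : R) : R :=
  det (d1 f s) (d2 f s) / (vnorm (d1 f s)) ^ 3.

Definition inflexion (f : curve) (s : R) : Prop := curvature f s = 0.

(** undulation point: tangent with contact of order >= 4 *)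
Definition undulation (f : curve) (s : R) : Prop :=
  curvature f s = 0 /\ Derive (curvature f) s = 0.

Definition transversal_self_crossings (f : curve) : Prop :=
  forall u v, ~ same_param u v -> f u = f v -> det (d1 f u) (d1 f v) <> 0.

Definition nondegenerate_inflexions (f : curve) : Prop :=
  forall s, inflexion f s -> Derive (curvature f) s <> 0.

Definition parallel_pair (f : curve) (u v : R) : Prop :=
  f u <> f v /\ det (d1 f u) (d1 f v) = 0.

(** Curvature kappa_g of the second point b = f v, computed for a local
    arc-length parametrization g with f'(u) = - g'(t) (f locally oriented as
    the global parametrization at u).  The factor dot/(norm*norm) is +-1 at a
    parallel pair: it is -1 when the global tangents are opposite (g has the
    global orientation) and +1 when they agree (g has the reversed one). *)
Definition kappa_g (f : curve) (u v : R) : R :=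
  - (dot (d1 f u) (d1 f v) / (vnorm (d1 f u) * vnorm (d1 f v))) * curvature f v.

Definition css_denom (f : curve) (u v : R) : R := curvature f u + kappa_g f u v.

Definition css_point (f : curve) (u v : R) : pt :=
  pscal (/ css_denom f u v)
        (padd (pscal (curvature f u) (f u)) (pscal (kappa_g f u v) (f v))).

Definition CSS (f : curve) (x : pt) : Prop :=
  exists u v, parallel_pair f u v /\ css_denom f u v <> 0 /\ x = css_point f u v.

(** parallel pair whose line is an asymptote of the CSS *)
Definition asymptotic_pair (f : curve) (u v : R) : Prop :=
  parallel_pair f u v /\ css_denom f u v = 0.

Definition on_line (a b x : pt) : Prop := det (psub b a) (psub x a) = 0.
Definition same_line (a b a' b' : pt) : Prop :=
  forall x, on_line a b x <-> on_line a' b' x.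

Definition no_double_asymptotes (f : curve) : Prop :=
  forall u v u' v', asymptotic_pair f u v -> asymptotic_pair f u' v' ->
    same_line (f u) (f v) (f u') (f v') ->
    (same_param u u' /\ same_param v v') \/ (same_param u v' /\ same_param v u').

Definition local_branch (f : curve) (u0 v0 delta : R) (tau : R -> R) : Prop :=
  0 < delta /\ tau u0 = v0 /\
  (forall s, Rabs (s - u0) < delta -> parallel_pair f s (tau s)) /\
  (forall (n : nat) s, Rabs (s - u0) < delta -> ex_derive_n tau n s).

Definition branch_css_curv_num (f : curve) (tau : R -> R) (s : R) : R :=
  let c := fun r => css_point f r (tau r) in det (d1 c s) (d2 c s).

Definition asymptotes_nondegenerate (f : curve) : Prop :=
  forall u0 v0, asymptotic_pair f u0 v0 ->
    exists delta tau, local_branch f u0 v0 delta tau /\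
      Derive (fun s => css_denom f s (tau s)) u0 <> 0 /\
      (forall s1 s2, u0 - delta < s1 < u0 -> u0 < s2 < u0 + delta ->
         branch_css_curv_num f tau s1 * branch_css_curv_num f tau s2 < 0).

Definition generic (f : curve) : Prop :=
  closed_curve f /\ regular f /\ transversal_self_crossings f /\
  nondegenerate_inflexions f /\ (forall s, ~ undulation f s) /\
  (forall u v, parallel_pair f u v -> ~ inflexion f u \/ ~ inflexion f v) /\
  no_double_asymptotes f /\ asymptotes_nondegenerate f.

(** coordinates relative to the line L through a = f u0, b = f v0:
    [along] is the (scaled) position along L in direction b - a,
    [across] the (scaled) signed distance from L. *)
Definition along (f : curve) (u0 v0 : R) (x : pt) : R :=
  dot (psub x (f u0)) (psub (f v0) (f u0)).
Definition across (f : curve) (u0 v0 : R) (x : pt) : R :=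
  det (psub (f v0) (f u0)) (psub x (f u0)).

(* Main.v *)
Require Import Defs.
From Stdlib Require Import Reals.
From Coquelicot Require Import Coquelicot.
From Stdlib Require Import Lra Lia ZArith Classical ClassicalEpsilon.
Import Defs.
Open Scope R_scope.

Fixpoint Ck (n : nat) (U : R -> Prop) (g : R -> R) : Prop :=
  match n with
  | O => forall x, U x -> continuous g x
  | S m => (forall x, U x -> ex_derive g x) /\ Ck m U (Derive g)
  end.

Definition Sm (U : R -> Prop) (g : R -> R) : Prop := forall n, Ck n U g.

Lemma exd_cont (g : R -> R) x : ex_derive g x -> continuous g x.
Proof. intros H. apply (@ex_derive_continuous R_AbsRing R_NormedModule). exact H. Qed.

Lemma exd_plus (g h : R -> R) x : ex_derive g x -> ex_derive h x -> ex_derive (fun y => g y + h y) x.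
Proof. intros H1 H2. exact (@ex_derive_plus R_AbsRing R_NormedModule g h x H1 H2). Qed.
Lemma exd_opp (g : R -> R) x : ex_derive g x -> ex_derive (fun y => - g y) x.
Proof. intros H1. exact (@ex_derive_opp R_AbsRing R_NormedModule g x H1). Qed.
Lemma exd_comp (g t : R -> R) x : ex_derive g (t x) -> ex_derive t x -> ex_derive (fun y => g (t y)) x.
Proof. intros H1 H2. exact (@ex_derive_comp R_AbsRing R_NormedModule g t x H1 H2). Qed.

Section CkS.
Variable U : R -> Prop.
Hypothesis HU : open U.

Lemma Ck_cont n g : Ck n U g -> forall x, U x -> continuous g x.
Proof.
  destruct n as [|n]; simpl; auto.
  intros [H _] x Hx. apply exd_cont. auto.
Qed.

Lemma Ck_weak n g : Ck (S n) U g -> Ck n U g.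
Proof.
  revert g; induction n as [|n IH]; intros g H.
  - simpl. apply (Ck_cont 1). exact H.
  - destruct H as [H1 H2]. split; auto.
Qed.

Lemma Ck_weak_le n m g : (m <= n)%nat -> Ck n U g -> Ck m U g.
Proof.
  intros Hle; induction Hle; auto. intros H; apply IHHle, Ck_weak, H.
Qed.

Lemma Ck_ext n g h : (forall x, U x -> g x = h x) -> Ck n U g -> Ck n U h.
Proof.
  revert g h; induction n as [|n IH]; intros g h E H.
  - simpl in *. intros x Hx. apply (continuous_ext_loc (T:=R_UniformSpace) (U:=R_UniformSpace) h g x).
    + apply (filter_imp U); [intros y Hy; auto | apply HU; auto].
    + auto.
  - destruct H as [H1 H2]. split.
    + intros x Hx. apply (ex_derive_ext_loc g h x).
      * apply (filter_imp U); [intros y Hy; auto | apply HU; auto].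
      * auto.
    + apply (IH (Derive g)); auto.
      intros x Hx. apply Derive_ext_loc. apply (filter_imp U); [intros y Hy; auto | apply HU; auto].
Qed.

Lemma Ck_const n : forall c, Ck n U (fun _ => c).
Proof.
  induction n as [|n IH]; intros c; simpl.
  - intros; apply continuous_const.
  - split. intros; apply ex_derive_const.
    apply (Ck_ext n (fun _ => 0)). intros; rewrite Derive_const; auto. apply IH.
Qed.

Lemma Ck_id n : Ck n U (fun x => x).
Proof.
  destruct n as [|n]; simpl.
  - intros; apply continuous_id.
  - split. intros; apply ex_derive_id.
    apply (Ck_ext n (fun _ => 1)). intros; rewrite <- (Derive_id x); reflexivity. apply Ck_const.
Qed.

Lemma Ck_plus n : forall g h, Ck n U g -> Ck n U h -> Ck n U (fun x => g x + h x).
Proof.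
  induction n as [|n IH]; intros g h Hg Hh; simpl in *.
  - intros x Hx. apply (continuous_plus g h); auto.
  - destruct Hg as [Hg1 Hg2]; destruct Hh as [Hh1 Hh2]. split.
    + intros; apply exd_plus; auto.
    + apply (Ck_ext n (fun x => Derive g x + Derive h x)).
      intros; rewrite Derive_plus; auto. apply IH; auto.
Qed.

Lemma Ck_opp n : forall g, Ck n U g -> Ck n U (fun x => - g x).
Proof.
  induction n as [|n IH]; intros g Hg; simpl in *.
  - intros x Hx. apply (continuous_opp g); auto.
  - destruct Hg as [Hg1 Hg2]. split.
    + intros; apply exd_opp; auto.
    + apply (Ck_ext n (fun x => - Derive g x)).
      intros; rewrite Derive_opp; auto. apply IH; auto.
Qed.

Lemma Ck_minus n g h : Ck n U g -> Ck n U h -> Ck n U (fun x => g x - h x).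
Proof. intros; apply Ck_plus; auto. apply Ck_opp; auto. Qed.

Lemma Ck_mult n : forall g h, Ck n U g -> Ck n U h -> Ck n U (fun x => g x * h x).
Proof.
  induction n as [|n IH]; intros g h Hg Hh.
  - simpl in *. intros x Hx. apply (continuous_mult g h); auto.
  - assert (Hg' := Ck_weak _ _ Hg). assert (Hh' := Ck_weak _ _ Hh).
    destruct Hg as [Hg1 Hg2]; destruct Hh as [Hh1 Hh2]. split.
    + intros; apply ex_derive_mult; auto.
    + apply (Ck_ext n (fun x => Derive g x * h x + g x * Derive h x)).
      intros; rewrite Derive_mult; auto. apply Ck_plus; apply IH; auto.
Qed.

Lemma Ck_inv n : forall g, (forall x, U x -> g x <> 0) -> Ck n U g -> Ck n U (fun x => / g x).
Proof.
  induction n as [|n IH]; intros g Hnz Hg.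
  - simpl in *. intros x Hx. apply continuity_pt_filterlim.
    apply continuity_pt_inv. apply continuity_pt_filterlim. apply Hg; auto. auto.
  - assert (Hg' := Ck_weak _ _ Hg).
    destruct Hg as [Hg1 Hg2]. split.
    + intros; apply ex_derive_inv; auto.
    + apply (Ck_ext n (fun x => - (Derive g x * (/ g x * / g x)))).
      intros; rewrite Derive_inv; auto. field. auto.
      apply Ck_opp. apply Ck_mult; auto. apply Ck_mult; auto.
Qed.

Lemma Ck_div n g h : (forall x, U x -> h x <> 0) -> Ck n U g -> Ck n U h -> Ck n U (fun x => g x / h x).
Proof. intros; apply Ck_mult; auto. apply Ck_inv; auto. Qed.

Lemma Ck_sqrt n : forall g, (forall x, U x -> 0 < g x) -> Ck n U g -> Ck n U (fun x => sqrt (g x)).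
Proof.
  induction n as [|n IH]; intros g Hp Hg.
  - simpl in *. intros x Hx. apply continuity_pt_filterlim.
    apply (continuity_pt_comp g sqrt). apply continuity_pt_filterlim; apply Hg; auto.
    apply continuity_pt_sqrt. generalize (Hp x Hx); lra.
  - assert (Hg' := Ck_weak _ _ Hg).
    destruct Hg as [Hg1 Hg2]. split.
    + intros x Hx. exists (Derive g x / (2 * sqrt (g x))). apply is_derive_sqrt; auto.
      apply Derive_correct; auto.
    + apply (Ck_ext n (fun x => Derive g x * (/ 2 * / sqrt (g x)))).
      intros x Hx. symmetry. apply is_derive_unique. 
      replace (Derive g x * (/ 2 * / sqrt (g x))) with (Derive g x / (2 * sqrt (g x))).
      apply is_derive_sqrt; auto. apply Derive_correct; auto.
      field. apply Rgt_not_eq, sqrt_lt_R0; auto.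
      apply Ck_mult; auto. apply Ck_mult. apply Ck_const. apply Ck_inv.
      intros x Hx; apply Rgt_not_eq, sqrt_lt_R0; auto. apply IH; auto.
Qed.

End CkS.

Lemma Ck_comp n : forall U V g t, open U -> open V ->
  (forall x, U x -> V (t x)) -> Ck n V g -> Ck n U t -> Ck n U (fun x => g (t x)).
Proof.
  induction n as [|n IH]; intros U V g t HU HV Hm Hg Ht.
  - simpl in *. intros x Hx. apply (continuous_comp t g); auto.
  - assert (Ht' : Ck n U t) by (apply Ck_weak; auto).
    destruct Hg as [Hg1 Hg2]; destruct Ht as [Ht1 Ht2]. split.
    + intros; apply exd_comp; auto.
    + apply (Ck_ext U HU n (fun x => Derive t x * Derive g (t x))).
      intros x Hx; rewrite (Derive_comp g t x); auto.
      apply Ck_mult; auto. apply (IH U V); auto.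
Qed.

Lemma Derive_n_S_swap g : forall m x, Derive_n (Derive g) m x = Derive_n g (S m) x.
Proof.
  induction m as [|m IH]; intros x; simpl. reflexivity.
  apply Derive_ext. intros; apply IH.
Qed.

Lemma Sm_of_exn U g : open U -> (forall n x, U x -> ex_derive_n g n x) -> Sm U g.
Proof.
  intros HU H n. revert g H. induction n as [|n IH]; intros g H; simpl.
  - intros x Hx. apply exd_cont. apply (H 1%nat x Hx).
  - split. intros x Hx. apply (H 1%nat x Hx).
    apply IH. intros m x Hx. destruct m as [|m]. simpl; auto.
    simpl. apply (ex_derive_ext (Derive_n g (S m))).
    intros; symmetry; apply Derive_n_S_swap. apply (H (S (S m)) x Hx).
Qed.

Lemma Sm_Derive U g : Sm U g -> Sm U (Derive g).
Proof. intros H n. apply (H (S n)). Qed.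
Lemma Sm_ex_derive U g : Sm U g -> forall x, U x -> ex_derive g x.
Proof. intros H. apply (H 1%nat). Qed.
Lemma Sm_cont U g : Sm U g -> forall x, U x -> continuous g x.
Proof. intros H. apply (H 0%nat). Qed.

Lemma Ck_pow U (HU : open U) n g k : Ck n U g -> Ck n U (fun x => g x ^ k).
Proof.
  intros H. induction k as [|k IH]; simpl.
  - apply Ck_const; auto.
  - apply Ck_mult; auto.
Qed.

Ltac ckt HU :=
  first
  [ assumption
  | apply Ck_const; exact HU
  | apply Ck_id; exact HU
  | apply Ck_plus; [exact HU | ckt HU | ckt HU]
  | apply Ck_minus; [exact HU | ckt HU | ckt HU]
  | apply Ck_opp; [exact HU | ckt HU]
  | apply Ck_div; [exact HU | | ckt HU | ckt HU]
  | apply Ck_mult; [exact HU | ckt HU | ckt HU]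
  | apply Ck_inv; [exact HU | | ckt HU]
  | apply Ck_pow; [exact HU | ckt HU]
  | idtac ].

Lemma Ck_sub n U V g : (forall x, V x -> U x) -> Ck n U g -> Ck n V g.
Proof.
  revert g; induction n as [|n IH]; simpl; intros g HVU H.
  - intros; apply H; auto.
  - destruct H as [H1 H2]. split. intros; apply H1; auto. apply IH; auto.
Qed.
Lemma Sm_sub U V g : (forall x, V x -> U x) -> Sm U g -> Sm V g.
Proof. intros H1 H2 n. apply (Ck_sub n U); auto. Qed.

Lemma cont_eps (g : R -> R) x : continuous g x ->
  forall eps, 0 < eps -> exists d, 0 < d /\ forall y, Rabs (y - x) < d -> Rabs (g y - g x) < eps.
Proof.
  intros H eps He.
  assert (H' : continuity_pt g x) by (apply continuity_pt_filterlim; exact H).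
  apply continuity_pt_locally with (eps := mkposreal eps He) in H'.
  destruct H' as [d Hd]. exists d. split. apply cond_pos.
  intros y Hy. apply Hd. exact Hy.
Qed.

Lemma cont_eps_pt (g : R -> R) x : continuity_pt g x ->
  forall eps, 0 < eps -> exists d, 0 < d /\ forall y, Rabs (y - x) < d -> Rabs (g y - g x) < eps.
Proof. intros H; apply cont_eps. apply continuity_pt_filterlim; exact H. Qed.

Lemma open_int a b : open (fun s => a < s < b).
Proof. apply open_and. apply open_gt. apply open_lt. Qed.

Lemma locally_int a b x : a < x < b -> locally x (fun s => a < s < b).
Proof. intros H. apply (open_int a b x H). Qed.

Lemma deriv_eps (g : R -> R) x l : is_derive g x l ->
  forall eps, 0 < eps -> exists d, 0 < d /\ forall y, Rabs (y - x) < d ->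
    Rabs (g y - g x - l * (y - x)) <= eps * Rabs (y - x).
Proof.
  intros H eps He. apply is_derive_Reals in H.
  destruct (H eps He) as [d Hd]. exists d. split. apply cond_pos.
  intros y Hy. destruct (Req_dec y x) as [E|E].
  - subst. replace (g x - g x - l * (x - x)) with 0 by ring. rewrite Rabs_R0, Rminus_diag_eq, Rabs_R0; lra.
  - assert (Hne : y - x <> 0) by lra.
    specialize (Hd (y - x) Hne Hy). replace (x + (y - x)) with y in Hd by ring.
    replace (g y - g x - l * (y - x)) with (((g y - g x) / (y - x) - l) * (y - x)) by (field; auto).
    rewrite Rabs_mult. apply Rmult_le_compat_r. apply Rabs_pos. lra.
Qed.

Lemma Rabs_lt_between' x y d : Rabs (y - x) < d <-> x - d < y < x + d.
Proof. split; intros H. apply Rabs_def2 in H; lra. apply Rabs_def1; lra. Qed.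

Lemma prod_close a a0 b b0 e : Rabs (a - a0) < e -> Rabs (b - b0) < e -> e <= 1 ->
  Rabs (a * b - a0 * b0) <= e * (Rabs a0 + Rabs b0 + 1).
Proof.
  intros Ha Hb He.
  replace (a * b - a0 * b0) with ((a - a0) * b + a0 * (b - b0)) by ring.
  eapply Rle_trans. apply Rabs_triang. rewrite !Rabs_mult.
  assert (Hb' : Rabs b <= Rabs b0 + 1).
  { replace b with ((b - b0) + b0) by ring. eapply Rle_trans. apply Rabs_triang. lra. }
  assert (0 <= Rabs (a - a0)) by apply Rabs_pos.
  assert (0 <= Rabs a0) by apply Rabs_pos.
  assert (0 <= Rabs (b - b0)) by apply Rabs_pos.
  assert (Rabs (a - a0) * Rabs b <= e * (Rabs b0 + 1)).
  { apply Rmult_le_compat; try lra. apply Rabs_pos. }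
  assert (Rabs a0 * Rabs (b - b0) <= Rabs a0 * e) by (apply Rmult_le_compat_l; lra).
  nra.
Qed.

Lemma det_close a1 a2 b1 b2 c1 c2 d1 d2 e :
  Rabs (a1 - c1) < e -> Rabs (a2 - c2) < e -> Rabs (b1 - d1) < e -> Rabs (b2 - d2) < e -> e <= 1 ->
  Rabs ((a1 * b2 - a2 * b1) - (c1 * d2 - c2 * d1)) <=
    e * (2 * (Rabs c1 + Rabs c2 + Rabs d1 + Rabs d2 + 1)).
Proof.
  intros H1 H2 H3 H4 He.
  assert (X1 := prod_close a1 c1 b2 d2 e H1 H4 He).
  assert (X2 := prod_close a2 c2 b1 d1 e H2 H3 He).
  replace ((a1 * b2 - a2 * b1) - (c1 * d2 - c2 * d1)) with ((a1 * b2 - c1 * d2) - (a2 * b1 - c2 * d1)) by ring.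
  eapply Rle_trans. apply Rabs_triang. rewrite Rabs_Ropp.
  assert (0 <= Rabs c1) by apply Rabs_pos. assert (0 <= Rabs c2) by apply Rabs_pos.
  assert (0 <= Rabs d1) by apply Rabs_pos. assert (0 <= Rabs d2) by apply Rabs_pos.
  assert (0 <= e) by (generalize (Rabs_pos (a1 - c1)); lra).
  nra.
Qed.

Lemma isd_val (g : R -> R) (x a b : R) : is_derive g x a -> a = b -> is_derive g x b.
Proof. intros H E; subst; auto. Qed.
Lemma isd_ext (g h : R -> R) (x a : R) : (forall y, g y = h y) -> is_derive g x a -> is_derive h x a.
Proof. intros E H. exact (@is_derive_ext R_AbsRing R_NormedModule g h x a E H). Qed.
Lemma isd_plus (g h : R -> R) (x a b : R) : is_derive g x a -> is_derive h x b -> is_derive (fun y => g y + h y) x (a + b).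
Proof. intros H1 H2. exact (@is_derive_plus R_AbsRing R_NormedModule g h x a b H1 H2). Qed.
Lemma isd_minus (g h : R -> R) (x a b : R) : is_derive g x a -> is_derive h x b -> is_derive (fun y => g y - h y) x (a - b).
Proof. intros H1 H2. exact (@is_derive_minus R_AbsRing R_NormedModule g h x a b H1 H2). Qed.
Lemma isd_opp (g : R -> R) (x a : R) : is_derive g x a -> is_derive (fun y => - g y) x (- a).
Proof. intros H1. exact (@is_derive_opp R_AbsRing R_NormedModule g x a H1). Qed.
Lemma isd_mult (g h : R -> R) (x a b : R) : is_derive g x a -> is_derive h x b -> is_derive (fun y => g y * h y) x (a * h x + g x * b).
Proof. intros H1 H2. exact (@is_derive_mult R_AbsRing g h x a b H1 H2 Rmult_comm). Qed.
Lemma isd_const (c x : R) : is_derive (fun _ : R => c) x 0.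
Proof. exact (@is_derive_const R_AbsRing R_NormedModule c x). Qed.
Lemma isd_id (x : R) : is_derive (fun y : R => y) x 1.
Proof. exact (@is_derive_id R_AbsRing x). Qed.
Lemma isd_comp (g t : R -> R) (x a b : R) : is_derive g (t x) a -> is_derive t x b -> is_derive (fun y => g (t y)) x (b * a).
Proof. intros H1 H2. exact (@is_derive_comp R_AbsRing R_NormedModule g t x a b H1 H2). Qed.
Lemma isd_inv (g : R -> R) (x a : R) : is_derive g x a -> g x <> 0 -> is_derive (fun y => / g y) x (- a / (g x) ^ 2).
Proof. intros H1 H2. apply is_derive_inv; auto. Qed.
Lemma isd_div (g h : R -> R) (x a b : R) : is_derive g x a -> is_derive h x b -> h x <> 0 ->
  is_derive (fun y => g y / h y) x ((a * h x - g x * b) / (h x) ^ 2).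
Proof. intros H1 H2 H3. eapply isd_val. apply (isd_mult g (fun y => / h y)). exact H1. apply isd_inv. exact H2. exact H3.
  unfold Rdiv. field; auto. Qed.
Lemma isd_unique (g : R -> R) (x a b : R) : is_derive g x a -> is_derive g x b -> a = b.
Proof. intros H1 H2. rewrite <- (is_derive_unique g x a H1). apply is_derive_unique; auto. Qed.

Lemma deriv_nz_inj (G G' : R -> R) al be a b :
  (forall z, al < z < be -> is_derive G z (G' z)) -> (forall z, al < z < be -> G' z <> 0) ->
  al < a < be -> al < b < be -> G a = G b -> a = b.
Proof.
  intros Hd Hnz Ha Hb E.
  assert (K : forall x y, al < x < be -> al < y < be -> x < y -> G x <> G y).
  { intros x y Hx Hy Hxy E'.
    destruct (MVT_cor2 G G' x y Hxy) as [c [Hc1 Hc2]].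
    - intros c Hc. apply is_derive_Reals. apply Hd. lra.
    - assert (G' c * (y - x) = 0) by lra. apply Rmult_integral in H. destruct H.
      apply (Hnz c); auto; lra. lra. }
  destruct (Rtotal_order a b) as [h|[h|h]]; auto.
  - exfalso; apply (K a b); auto.
  - exfalso; apply (K b a); auto.
Qed.

Definition sgn (x : R) : R := if Rle_dec 0 x then 1 else -1.
Lemma sgn_sq x : sgn x * sgn x = 1.
Proof. unfold sgn; destruct (Rle_dec 0 x); ring. Qed.
Lemma sgn_pos x : x <> 0 -> 0 < sgn x * x.
Proof. unfold sgn; destruct (Rle_dec 0 x); intros; lra. Qed.
Lemma sgn_pm x : sgn x = 1 \/ sgn x = -1.
Proof. unfold sgn; destruct (Rle_dec 0 x); auto. Qed.

Lemma close_pos a b : Rabs (a - b) < Rabs b -> 0 < a * b.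
Proof.
  intros H. destruct (Rle_or_lt 0 b) as [hb|hb].
  - rewrite (Rabs_pos_eq b) in H by lra. apply Rabs_def2 in H. nra.
  - rewrite (Rabs_left b) in H by lra. apply Rabs_def2 in H. nra.
Qed.

Lemma close_pos2 a b : Rabs (a - b) <= Rabs b / 2 -> b <> 0 -> 0 < a * b.
Proof.
  intros H Hb. apply close_pos. assert (0 < Rabs b) by (apply Rabs_pos_lt; auto). lra.
Qed.

Lemma pos_reg x y : 0 < x * y -> 0 < y -> 0 < x.
Proof. intros H1 H2. destruct (Rle_or_lt x 0); auto. nra. Qed.

Definition TT : R -> Prop := fun _ => True.
Lemma open_TT : open TT.
Proof. intros x _. apply filter_true. Qed.

Definition F1 (f : curve) s := fst (f s).
Definition F2 (f : curve) s := snd (f s).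
Definition P1 f := Derive (F1 f).
Definition P2 f := Derive (F2 f).
Definition Q1 f := Derive (P1 f).
Definition Q2 f := Derive (P2 f).
Definition NR f s := sqrt (P1 f s * P1 f s + P2 f s * P2 f s).

Lemma d1_eq f s : d1 f s = (P1 f s, P2 f s).
Proof. reflexivity. Qed.
Lemma d2_eq f s : d2 f s = (Q1 f s, Q2 f s).
Proof. reflexivity. Qed.
Lemma vnorm_d1 f s : vnorm (d1 f s) = NR f s.
Proof. reflexivity. Qed.

Lemma curv_eq f s : curvature f s =
  (P1 f s * Q2 f s - P2 f s * Q1 f s) / (NR f s ^ 3).
Proof. reflexivity. Qed.

Lemma kappa_g_eq f u v : kappa_g f u v =
  - ((P1 f u * P1 f v + P2 f u * P2 f v) / (NR f u * NR f v)) * curvature f v.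
Proof. reflexivity. Qed.

Section Sm_curve.
Variable f : curve.
Hypothesis Hsm : smooth_curve f.
Hypothesis Hreg : regular f.

Lemma Sm_F1 : Sm TT (F1 f).
Proof. apply Sm_of_exn. apply open_TT. intros n x _. apply (Hsm n x). Qed.
Lemma Sm_F2 : Sm TT (F2 f).
Proof. apply Sm_of_exn. apply open_TT. intros n x _. apply (Hsm n x). Qed.
Lemma Sm_P1 : Sm TT (P1 f). Proof. apply Sm_Derive, Sm_F1. Qed.
Lemma Sm_P2 : Sm TT (P2 f). Proof. apply Sm_Derive, Sm_F2. Qed.
Lemma Sm_Q1 : Sm TT (Q1 f). Proof. apply Sm_Derive, Sm_P1. Qed.
Lemma Sm_Q2 : Sm TT (Q2 f). Proof. apply Sm_Derive, Sm_P2. Qed.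

Lemma dot_pos s : 0 < P1 f s * P1 f s + P2 f s * P2 f s.
Proof.
  destruct (Req_dec (P1 f s) 0) as [h1|h1].
  - destruct (Req_dec (P2 f s) 0) as [h2|h2].
    + exfalso. apply (Hreg s). rewrite d1_eq, h1, h2. reflexivity.
    + rewrite h1. assert (0 < P2 f s * P2 f s) by (apply Rsqr_pos_lt; auto). lra.
  - assert (0 < P1 f s * P1 f s) by (apply Rsqr_pos_lt; auto).
    assert (0 <= P2 f s * P2 f s) by apply Rle_0_sqr. lra.
Qed.

Lemma NR_pos s : 0 < NR f s.
Proof. apply sqrt_lt_R0, dot_pos. Qed.

Lemma NR_sq s : NR f s * NR f s = P1 f s * P1 f s + P2 f s * P2 f s.
Proof. unfold NR. apply sqrt_sqrt. generalize (dot_pos s); lra. Qed.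

Lemma Sm_NR : Sm TT (NR f).
Proof.
  intros n. unfold NR. apply Ck_sqrt. apply open_TT. intros; apply dot_pos.
  apply Ck_plus. apply open_TT. apply Ck_mult; [apply open_TT|apply Sm_P1|apply Sm_P1].
  apply Ck_mult; [apply open_TT|apply Sm_P2|apply Sm_P2].
Qed.

Lemma Sm_K : Sm TT (curvature f).
Proof.
  intros n. apply (Ck_ext _ open_TT n (fun s => (P1 f s * Q2 f s - P2 f s * Q1 f s) / (NR f s ^ 3))).
  intros; symmetry; apply curv_eq.
  apply Ck_div. apply open_TT. intros. apply pow_nonzero. apply Rgt_not_eq, NR_pos.
  apply Ck_minus. apply open_TT. apply Ck_mult; [apply open_TT|apply Sm_P1|apply Sm_Q2].
  apply Ck_mult; [apply open_TT|apply Sm_P2|apply Sm_Q1].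
  simpl. apply Ck_mult. apply open_TT. apply Sm_NR. apply Ck_mult. apply open_TT. apply Sm_NR.
  apply Ck_mult. apply open_TT. apply Sm_NR. apply Ck_const. apply open_TT.
Qed.

End Sm_curve.

Definition sig f u v := (P1 f u * P1 f v + P2 f u * P2 f v) / (NR f u * NR f v).

Lemma kappa_g_sig f u v : kappa_g f u v = - sig f u v * curvature f v.
Proof. reflexivity. Qed.

Lemma sig_sym f u v : sig f u v = sig f v u.
Proof. unfold sig. f_equal; ring. Qed.

Lemma det_d1 f u v : det (d1 f u) (d1 f v) = P1 f u * P2 f v - P2 f u * P1 f v.
Proof. reflexivity. Qed.

Lemma sig_sq f (Hsm : smooth_curve f) (Hreg : regular f) u v :
  det (d1 f u) (d1 f v) = 0 -> sig f u v * sig f u v = 1.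
Proof.
  rewrite det_d1. intros H. unfold sig.
  assert (Hu := NR_pos f Hreg u). assert (Hv := NR_pos f Hreg v).
  assert (Eu := NR_sq f Hreg u). assert (Ev := NR_sq f Hreg v).
  assert (L : (P1 f u * P1 f v + P2 f u * P2 f v) * (P1 f u * P1 f v + P2 f u * P2 f v)
    = (NR f u * NR f u) * (NR f v * NR f v)).
  { rewrite Eu, Ev. replace (P1 f u * P2 f v) with (P2 f u * P1 f v) in H |- * by lra.
    assert (E2 : (P1 f u * P1 f v + P2 f u * P2 f v) * (P1 f u * P1 f v + P2 f u * P2 f v) +
      (P1 f u * P2 f v - P2 f u * P1 f v) * (P1 f u * P2 f v - P2 f u * P1 f v) =
      (P1 f u * P1 f u + P2 f u * P2 f u) * (P1 f v * P1 f v + P2 f v * P2 f v)) by ring.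
    rewrite H in E2. lra. }
  replace ((P1 f u * P1 f v + P2 f u * P2 f v) / (NR f u * NR f v) *
    ((P1 f u * P1 f v + P2 f u * P2 f v) / (NR f u * NR f v))) with
    (((P1 f u * P1 f v + P2 f u * P2 f v) * (P1 f u * P1 f v + P2 f u * P2 f v)) /
     ((NR f u * NR f u) * (NR f v * NR f v))) by (field; split; lra).
  rewrite L. field. split; lra.
Qed.

Section Per.
Variable f : curve.
Hypothesis Hcl : closed_curve f.
Hypothesis Hreg : regular f.
Let Hsm : smooth_curve f := proj1 Hcl.

Lemma f_shift_nat n s : f (s + INR n) = f s.
Proof.
  induction n as [|n IH]. simpl. rewrite Rplus_0_r; auto.
  rewrite S_INR. replace (s + (INR n + 1)) with ((s + INR n) + 1) by ring.
  rewrite (proj2 Hcl). auto.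
Qed.

Lemma f_shift k s : f (s + IZR k) = f s.
Proof.
  destruct (Z_le_gt_dec 0 k) as [h|h].
  - destruct (Z_of_nat_complete k h) as [n ->]. rewrite <- INR_IZR_INZ. apply f_shift_nat.
  - assert (h' : (0 <= - k)%Z) by lia.
    destruct (Z_of_nat_complete (- k) h') as [n Hn].
    replace k with (- Z.of_nat n)%Z by lia. rewrite opp_IZR, <- INR_IZR_INZ.
    rewrite <- (f_shift_nat n (s + - INR n)). f_equal. ring.
Qed.

Lemma per_Derive (g : R -> R) c s : (forall y, g (y + c) = g y) -> ex_derive g (s + c) ->
  Derive g (s + c) = Derive g s.
Proof.
  intros Hp Hd. rewrite <- (Derive_ext (fun y => g (y + c)) g s Hp).
  rewrite (Derive_comp g (fun y => y + c) s); auto.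
  replace (Derive (fun y => y + c) s) with 1 by (symmetry; apply is_derive_unique; auto_derive; auto; ring).
  ring.
  apply (ex_derive_ext (fun y => y + c)); [intros; reflexivity|]. auto_derive; auto.
Qed.

Lemma F1_shift k s : F1 f (s + IZR k) = F1 f s.
Proof. unfold F1; rewrite f_shift; auto. Qed.
Lemma F2_shift k s : F2 f (s + IZR k) = F2 f s.
Proof. unfold F2; rewrite f_shift; auto. Qed.
Lemma P1_shift k s : P1 f (s + IZR k) = P1 f s.
Proof. apply per_Derive. intros; apply F1_shift. apply (Sm_ex_derive _ _ (Sm_F1 f Hsm)). exact I. Qed.
Lemma P2_shift k s : P2 f (s + IZR k) = P2 f s.
Proof. apply per_Derive. intros; apply F2_shift. apply (Sm_ex_derive _ _ (Sm_F2 f Hsm)). exact I. Qed.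
Lemma Q1_shift k s : Q1 f (s + IZR k) = Q1 f s.
Proof. apply per_Derive. intros; apply P1_shift. apply (Sm_ex_derive _ _ (Sm_P1 f Hsm)). exact I. Qed.
Lemma Q2_shift k s : Q2 f (s + IZR k) = Q2 f s.
Proof. apply per_Derive. intros; apply P2_shift. apply (Sm_ex_derive _ _ (Sm_P2 f Hsm)). exact I. Qed.
Lemma NR_shift k s : NR f (s + IZR k) = NR f s.
Proof. unfold NR. rewrite !P1_shift, !P2_shift. auto. Qed.
Lemma d1_shift k s : d1 f (s + IZR k) = d1 f s.
Proof. rewrite !d1_eq, P1_shift, P2_shift; auto. Qed.
Lemma K_shift k s : curvature f (s + IZR k) = curvature f s.
Proof. rewrite !curv_eq, P1_shift, P2_shift, Q1_shift, Q2_shift, NR_shift. auto. Qed.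
Lemma kg_shift k m u v : kappa_g f (u + IZR k) (v + IZR m) = kappa_g f u v.
Proof. rewrite !kappa_g_eq, !P1_shift, !P2_shift, !NR_shift, K_shift. auto. Qed.
Lemma denom_shift k m u v : css_denom f (u + IZR k) (v + IZR m) = css_denom f u v.
Proof. unfold css_denom. rewrite kg_shift, K_shift. auto. Qed.
Lemma point_shift k m u v : css_point f (u + IZR k) (v + IZR m) = css_point f u v.
Proof. unfold css_point. rewrite denom_shift, kg_shift, K_shift, !f_shift. auto. Qed.
Lemma pp_shift k m u v : parallel_pair f (u + IZR k) (v + IZR m) <-> parallel_pair f u v.
Proof. unfold parallel_pair. rewrite !f_shift, !d1_shift. tauto. Qed.

End Per.

Lemma pp_sym f u v : parallel_pair f u v -> parallel_pair f v u.
Proof.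
  unfold parallel_pair. rewrite !det_d1. intros [H1 H2]. split; auto. lra.
Qed.

Lemma denom_sym f (Hsm : smooth_curve f) (Hreg : regular f) u v :
  det (d1 f u) (d1 f v) = 0 -> css_denom f v u = - sig f u v * css_denom f u v.
Proof.
  intros H. assert (S := sig_sq f Hsm Hreg u v H).
  unfold css_denom. rewrite !kappa_g_sig, (sig_sym f v u).
  replace (- sig f u v * (curvature f u + - sig f u v * curvature f v))
    with (- sig f u v * curvature f u + (sig f u v * sig f u v) * curvature f v) by ring.
  rewrite S. ring.
Qed.

Lemma alg_sym s ku kv x y : s * s = 1 -> ku + - s * kv <> 0 ->
  / (- s * (ku + - s * kv)) * (kv * y + - s * ku * x) = / (ku + - s * kv) * (ku * x + - s * kv * y).
Proof.
  intros S H. assert (Hs : s <> 0) by (intro E; rewrite E in S; lra).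
  field_simplify_eq; [|split; auto].
  replace (s ^ 2) with (s * s) by ring. rewrite S. ring.
Qed.

Lemma point_sym f (Hsm : smooth_curve f) (Hreg : regular f) u v :
  det (d1 f u) (d1 f v) = 0 -> css_denom f u v <> 0 -> css_point f v u = css_point f u v.
Proof.
  intros H HD. assert (S := sig_sq f Hsm Hreg u v H).
  unfold css_point. rewrite (denom_sym f Hsm Hreg u v H).
  unfold css_denom in *. rewrite !kappa_g_sig in *. rewrite (sig_sym f v u).
  unfold pscal, padd; simpl. f_equal; apply alg_sym; auto.
Qed.

(* p = P(u1), q = P(v1), A = Q(u1), B = Q(v1) *)
Lemma tau_alg p1 p2 q1 q2 A1 A2 B1 B2 np nq t :
  0 < np -> 0 < nq -> np * np = p1 * p1 + p2 * p2 -> nq * nq = q1 * q1 + q2 * q2 ->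
  p1 * q2 - p2 * q1 = 0 ->
  A1 * q2 + p1 * (t * B2) - A2 * q1 - p2 * (t * B1) = 0 ->
  (p1 * A2 - p2 * A1) / np ^ 3 +
    - ((p1 * q1 + p2 * q2) / (np * nq)) * ((q1 * B2 - q2 * B1) / nq ^ 3) = 0 ->
  (q1 * B2 - q2 * B1) / nq ^ 3 <> 0 ->
  t * q1 = p1 /\ t * q2 = p2.
Proof.
  intros Hnp Hnq Ep Eq H0 HE HD Hkv.
  set (dt := p1 * q1 + p2 * q2).
  assert (Ldot : dt * dt = (np * np) * (nq * nq)).
  { rewrite Ep, Eq. unfold dt.
    assert (E2 : (p1 * q1 + p2 * q2) * (p1 * q1 + p2 * q2) + (p1 * q2 - p2 * q1) * (p1 * q2 - p2 * q1)
      = (p1 * p1 + p2 * p2) * (q1 * q1 + q2 * q2)) by ring.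
    rewrite H0 in E2. lra. }
  assert (Hdt : dt <> 0).
  { intro E. rewrite E in Ldot. assert (0 < (np * np) * (nq * nq)) by (apply Rmult_lt_0_compat; nra). lra. }
  set (ku := (p1 * A2 - p2 * A1) / np ^ 3) in *.
  set (kv := (q1 * B2 - q2 * B1) / nq ^ 3) in *.
  assert (EpA : p1 * A2 - p2 * A1 = ku * np ^ 3) by (unfold ku; field; lra).
  assert (EqB : q1 * B2 - q2 * B1 = kv * nq ^ 3) by (unfold kv; field; lra).
  assert (I1 : (A1 * q2 - A2 * q1) * (np * np) = - (p1 * A2 - p2 * A1) * dt + (p1 * q2 - p2 * q1) * (A1 * p1 + A2 * p2))
    by (rewrite Ep; unfold dt; ring).
  assert (I2 : (p1 * B2 - p2 * B1) * (nq * nq) = (q1 * B2 - q2 * B1) * dt + (p1 * q2 - p2 * q1) * (B1 * q1 + B2 * q2))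
    by (rewrite Eq; unfold dt; ring).
  rewrite H0 in I1, I2.
  assert (E3 : (A1 * q2 - A2 * q1) + t * (p1 * B2 - p2 * B1) = 0) by lra.
  assert (E4 : dt * (t * (q1 * B2 - q2 * B1) * (np * np) - (p1 * A2 - p2 * A1) * (nq * nq)) = 0).
  { assert (E5 : ((A1 * q2 - A2 * q1) + t * (p1 * B2 - p2 * B1)) * (np * np) * (nq * nq) = 0) by (rewrite E3; ring).
    replace (((A1 * q2 - A2 * q1) + t * (p1 * B2 - p2 * B1)) * (np * np) * (nq * nq)) with
      ((A1 * q2 - A2 * q1) * (np * np) * (nq * nq) + t * ((p1 * B2 - p2 * B1) * (nq * nq)) * (np * np)) in E5 by ring.
    rewrite I1, I2 in E5. lra. }
  assert (E6 : t * (q1 * B2 - q2 * B1) * (np * np) = (p1 * A2 - p2 * A1) * (nq * nq)).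
  { apply Rmult_integral in E4. destruct E4 as [E4|E4]. contradiction. lra. }
  rewrite EpA, EqB in E6.
  assert (E7 : t * kv * nq = ku * np).
  { assert (0 < np * np * nq * nq) by (apply Rmult_lt_0_compat; [apply Rmult_lt_0_compat|]; nra).
    apply (Rmult_eq_reg_r (np * np * nq * nq)); [|lra].
    replace (t * kv * nq * (np * np * nq * nq)) with (t * kv * nq ^ 3 * (np * np)) by ring.
    replace (ku * np * (np * np * nq * nq)) with (ku * np ^ 3 * (nq * nq)) by ring. lra. }
  assert (E8 : ku * np * nq = dt * kv).
  { unfold dt. apply (Rmult_eq_reg_r (/ (np * nq))). 
    replace (ku * np * nq * / (np * nq)) with ku by (field; lra).
    replace (dt * kv * / (np * nq)) with ((p1 * q1 + p2 * q2) / (np * nq) * kv) by (unfold dt; field; lra).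
    fold kv. lra. apply Rinv_neq_0_compat. nra. }
  assert (E9 : t * (nq * nq) = dt).
  { apply (Rmult_eq_reg_r kv); auto.
    replace (t * (nq * nq) * kv) with ((t * kv * nq) * nq) by ring. rewrite E7. lra. }
  assert (Hnq2 : nq * nq <> 0) by nra.
  split; apply (Rmult_eq_reg_r (nq * nq)); auto.
  - replace (t * q1 * (nq * nq)) with (t * (nq * nq) * q1) by ring. rewrite E9. unfold dt.
    rewrite Eq. replace (p1 * (q1 * q1 + q2 * q2)) with ((p1 * q1 + p2 * q2) * q1 + q2 * (p1 * q2 - p2 * q1)) by ring.
    rewrite H0. ring.
  - replace (t * q2 * (nq * nq)) with (t * (nq * nq) * q2) by ring. rewrite E9. unfold dt.
    rewrite Eq. replace (p2 * (q1 * q1 + q2 * q2)) with ((p1 * q1 + p2 * q2) * q2 - q1 * (p1 * q2 - p2 * q1)) by ring.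
    rewrite H0. ring.
Qed.

Lemma dpB_alg p1 p2 q1 q2 B1 B2 np nq :
  0 < np -> 0 < nq -> np * np = p1 * p1 + p2 * p2 -> nq * nq = q1 * q1 + q2 * q2 ->
  p1 * q2 - p2 * q1 = 0 -> (q1 * B2 - q2 * B1) / nq ^ 3 <> 0 -> p1 * B2 - p2 * B1 <> 0.
Proof.
  intros Hnp Hnq Ep Eq H0 Hkv E.
  set (dt := p1 * q1 + p2 * q2).
  assert (Ldot : dt * dt = (np * np) * (nq * nq)).
  { rewrite Ep, Eq. unfold dt.
    assert (E2 : (p1 * q1 + p2 * q2) * (p1 * q1 + p2 * q2) + (p1 * q2 - p2 * q1) * (p1 * q2 - p2 * q1)
      = (p1 * p1 + p2 * p2) * (q1 * q1 + q2 * q2)) by ring.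
    rewrite H0 in E2. lra. }
  assert (Hdt : dt <> 0).
  { intro E'. rewrite E' in Ldot. assert (0 < (np * np) * (nq * nq)) by (apply Rmult_lt_0_compat; nra). lra. }
  assert (I2 : (p1 * B2 - p2 * B1) * (nq * nq) = (q1 * B2 - q2 * B1) * dt + (p1 * q2 - p2 * q1) * (B1 * q1 + B2 * q2))
    by (rewrite Eq; unfold dt; ring).
  rewrite H0, E in I2.
  assert (q1 * B2 - q2 * B1 = 0).
  { assert (Hm : (q1 * B2 - q2 * B1) * dt = 0) by lra.
    apply Rmult_integral in Hm. destruct Hm; auto. contradiction. }
  apply Hkv. rewrite H. unfold Rdiv. ring.
Qed.

Lemma isd_P1 f (Hsm : smooth_curve f) x : is_derive (P1 f) x (Q1 f x).
Proof. apply Derive_correct. apply (Sm_ex_derive _ _ (Sm_P1 f Hsm)). exact I. Qed.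
Lemma isd_P2 f (Hsm : smooth_curve f) x : is_derive (P2 f) x (Q2 f x).
Proof. apply Derive_correct. apply (Sm_ex_derive _ _ (Sm_P2 f Hsm)). exact I. Qed.
Lemma isd_F1 f (Hsm : smooth_curve f) x : is_derive (F1 f) x (P1 f x).
Proof. apply Derive_correct. apply (Sm_ex_derive _ _ (Sm_F1 f Hsm)). exact I. Qed.
Lemma isd_F2 f (Hsm : smooth_curve f) x : is_derive (F2 f) x (P2 f x).
Proof. apply Derive_correct. apply (Sm_ex_derive _ _ (Sm_F2 f Hsm)). exact I. Qed.

Lemma kappas_nonzero f (Hg : generic f) u v : asymptotic_pair f u v ->
  curvature f u <> 0 /\ curvature f v <> 0.
Proof.
  intros [Hpp HD].
  destruct Hg as [Hcl [Hreg [_ [_ [_ [Hinf _]]]]]].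
  assert (S := sig_sq f (proj1 Hcl) Hreg u v (proj2 Hpp)).
  unfold css_denom in HD. rewrite kappa_g_sig in HD.
  destruct (Hinf u v Hpp) as [H|H]; unfold inflexion in H.
  - split; auto. intro E. rewrite E in HD. apply H. nra.
  - split; auto. intro E. apply H. assert (sig f u v * curvature f u = curvature f v) by nra. nra.
Qed.

Section Loc.
Variable f : curve.
Hypothesis Hg : generic f.
Let Hcl : closed_curve f := proj1 Hg.
Let Hsm : smooth_curve f := proj1 Hcl.
Let Hreg : regular f := proj1 (proj2 Hg).
Variables u1 v1 delta : R.
Variable tau : R -> R.
Hypothesis Has : asymptotic_pair f u1 v1.
Hypothesis Hbr : local_branch f u1 v1 delta tau.

Definition UB := fun s => u1 - delta < s < u1 + delta.
Lemma open_UB : open UB. Proof. apply open_int. Qed.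
Lemma UB_abs s : Rabs (s - u1) < delta <-> UB s.
Proof. unfold UB. split; intros H. apply Rabs_def2 in H; lra. apply Rabs_def1; lra. Qed.

Lemma delta_pos : 0 < delta. Proof. apply Hbr. Qed.
Lemma tau_u1 : tau u1 = v1. Proof. apply Hbr. Qed.
Lemma UB_u1 : UB u1. Proof. unfold UB; generalize delta_pos; lra. Qed.

Lemma Sm_tau : Sm UB tau.
Proof.
  apply Sm_of_exn. apply open_UB. intros n x Hx. apply Hbr. apply UB_abs; auto.
Qed.

Lemma Sm_ctau g : Sm TT g -> Sm UB (fun s => g (tau s)).
Proof.
  intros H n. apply (Ck_comp n UB TT). apply open_UB. apply open_TT. intros; exact I.
  apply H. apply Sm_tau.
Qed.

Lemma Sm_TT_UB g : Sm TT g -> Sm UB g.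
Proof.
  intros H n. generalize (H n). clear H. revert g. induction n as [|n IH]; simpl; intros g H.
  - intros; apply H; exact I.
  - destruct H as [H1 H2]. split. intros; apply H1; exact I. apply IH; auto.
Qed.

Lemma pp_branch s : UB s -> parallel_pair f s (tau s).
Proof. intros H. apply Hbr. apply UB_abs; auto. Qed.

Lemma Sm_Db : Sm UB (fun s => css_denom f s (tau s)).
Proof.
  intros n.
  pose proof (Sm_TT_UB _ (Sm_K f Hsm Hreg) n) as HK.
  pose proof (Sm_TT_UB _ (Sm_P1 f Hsm) n) as HP1.
  pose proof (Sm_TT_UB _ (Sm_P2 f Hsm) n) as HP2.
  pose proof (Sm_TT_UB _ (Sm_NR f Hsm Hreg) n) as HN.
  pose proof (Sm_ctau _ (Sm_K f Hsm Hreg) n) as HKt.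
  pose proof (Sm_ctau _ (Sm_P1 f Hsm) n) as HP1t.
  pose proof (Sm_ctau _ (Sm_P2 f Hsm) n) as HP2t.
  pose proof (Sm_ctau _ (Sm_NR f Hsm Hreg) n) as HNt.
  change (Ck n UB (fun s => curvature f s + - ((P1 f s * P1 f (tau s) + P2 f s * P2 f (tau s)) /
     (NR f s * NR f (tau s))) * curvature f (tau s))).
  ckt open_UB.
  intros x _. apply Rmult_integral_contrapositive. split; apply Rgt_not_eq, NR_pos; auto.
Qed.


Lemma tau_exd s : UB s -> ex_derive tau s.
Proof. intros H. apply (Sm_ex_derive _ _ Sm_tau s H). Qed.

Lemma isd_ctau (g dg : R -> R) s : UB s -> (forall x, is_derive g x (dg x)) ->
  is_derive (fun y => g (tau y)) s (Derive tau s * dg (tau s)).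
Proof.
  intros Hs Hd. apply (is_derive_comp g tau s (dg (tau s)) (Derive tau s)).
  apply Hd. apply Derive_correct, tau_exd; auto.
Qed.

Definition tp := Derive tau u1.

Lemma tau_deriv_rel : tp * P1 f v1 = P1 f u1 /\ tp * P2 f v1 = P2 f u1.
Proof.
  set (Phi := fun s => P1 f s * P2 f (tau s) - P2 f s * P1 f (tau s)).
  assert (H0 : is_derive Phi u1 0).
  { apply (is_derive_ext_loc (fun _ => 0)). 
    apply (filter_imp UB). intros y Hy. unfold Phi.
      destruct (pp_branch y Hy) as [_ Hd]. rewrite det_d1 in Hd. lra.
      apply open_UB, UB_u1.
    apply (is_derive_const 0). }
  assert (H1 : is_derive Phi u1 ((Q1 f u1 * P2 f (tau u1) + P1 f u1 * (tp * Q2 f (tau u1))) -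
                                 (Q2 f u1 * P1 f (tau u1) + P2 f u1 * (tp * Q1 f (tau u1))))).
  { unfold Phi. apply (is_derive_minus (fun s => P1 f s * P2 f (tau s)) (fun s => P2 f s * P1 f (tau s))).
    - apply (is_derive_mult (P1 f) (fun s => P2 f (tau s))).
      apply isd_P1; auto. apply isd_ctau. apply UB_u1. intros; apply isd_P2; auto.
      intros; apply Rmult_comm.
    - apply (is_derive_mult (P2 f) (fun s => P1 f (tau s))).
      apply isd_P2; auto. apply isd_ctau. apply UB_u1. intros; apply isd_P1; auto.
      intros; apply Rmult_comm. }
  assert (E := is_derive_unique _ _ _ H0). rewrite (is_derive_unique _ _ _ H1) in E.
  rewrite tau_u1 in E.
  destruct Has as [[_ Hdet] HD].
  rewrite det_d1 in Hdet.
  destruct (kappas_nonzero f Hg u1 v1 Has) as [_ Hkv].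
  rewrite curv_eq in Hkv.
  unfold css_denom in HD. rewrite kappa_g_eq, !curv_eq in HD.
  apply (tau_alg _ _ _ _ (Q1 f u1) (Q2 f u1) (Q1 f v1) (Q2 f v1) (NR f u1) (NR f v1)); auto.
  apply NR_pos; auto. apply NR_pos; auto.
  apply NR_sq; auto. apply NR_sq; auto.
  lra.
Qed.


Definition wv := psub (f v1) (f u1).
Definition Bf s := det wv (psub (f s) (f u1)).
Definition hY s := curvature f s * Bf s + kappa_g f s (tau s) * Bf (tau s).

Lemma across_css s : css_denom f s (tau s) <> 0 ->
  across f u1 v1 (css_point f s (tau s)) = hY s / css_denom f s (tau s).
Proof.
  intros HD. unfold across, hY, Bf, wv, css_point, det, psub, pscal, padd. simpl.
  unfold css_denom in *. field. auto.
Qed.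

Lemma isd_Bf (x : R) : is_derive Bf x (fst wv * P2 f x - snd wv * P1 f x).
Proof.
  apply (isd_ext (fun s => fst wv * (F2 f s - snd (f u1)) - snd wv * (F1 f s - fst (f u1)))).
  intros t; reflexivity.
  eapply isd_val.
  apply isd_minus; (apply isd_mult; [apply isd_const | apply isd_minus; [| apply isd_const]]).
  apply isd_F2; auto. apply isd_F1; auto. cbv beta. ring.
Qed.

Lemma Bf_u1 : Bf u1 = 0.
Proof. unfold Bf, det, psub. simpl. ring. Qed.
Lemma Bf_v1 : Bf v1 = 0.
Proof. unfold Bf, wv, det, psub. simpl. ring. Qed.

Lemma Sm_kg : Sm UB (fun s => kappa_g f s (tau s)).
Proof.
  intros n.
  pose proof (Sm_TT_UB _ (Sm_P1 f Hsm) n) as HP1.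
  pose proof (Sm_TT_UB _ (Sm_P2 f Hsm) n) as HP2.
  pose proof (Sm_TT_UB _ (Sm_NR f Hsm Hreg) n) as HN.
  pose proof (Sm_ctau _ (Sm_K f Hsm Hreg) n) as HKt.
  pose proof (Sm_ctau _ (Sm_P1 f Hsm) n) as HP1t.
  pose proof (Sm_ctau _ (Sm_P2 f Hsm) n) as HP2t.
  pose proof (Sm_ctau _ (Sm_NR f Hsm Hreg) n) as HNt.
  change (Ck n UB (fun s => - ((P1 f s * P1 f (tau s) + P2 f s * P2 f (tau s)) /
     (NR f s * NR f (tau s))) * curvature f (tau s))).
  ckt open_UB.
  intros x _. apply Rmult_integral_contrapositive. split; apply Rgt_not_eq, NR_pos; auto.
Qed.

Lemma hY_u1 : hY u1 = 0.
Proof. unfold hY. rewrite tau_u1, Bf_u1, Bf_v1. ring. Qed.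

Lemma hY_deriv : is_derive hY u1 0.
Proof.
  set (kg := fun s => kappa_g f s (tau s)).
  assert (Hk : is_derive (curvature f) u1 (Derive (curvature f) u1)).
  { apply Derive_correct. apply (Sm_ex_derive _ _ (Sm_K f Hsm Hreg)). exact I. }
  assert (Hkg : is_derive kg u1 (Derive kg u1)).
  { apply Derive_correct. apply (Sm_ex_derive _ _ Sm_kg). apply UB_u1. }
  assert (HE : is_derive (fun s => Bf (tau s)) u1 (tp * (fst wv * P2 f (tau u1) - snd wv * P1 f (tau u1)))).
  { apply (isd_ctau Bf (fun z => fst wv * P2 f z - snd wv * P1 f z) u1). apply UB_u1. intros; apply isd_Bf. }
  unfold hY. eapply isd_val.
  apply isd_plus. apply isd_mult. exact Hk. apply isd_Bf.
  apply (isd_mult kg (fun s => Bf (tau s))). exact Hkg. exact HE.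
  rewrite Bf_u1, tau_u1, Bf_v1.
  destruct tau_deriv_rel as [E1 E2].
  destruct Has as [_ HD]. unfold css_denom in HD. unfold kg. rewrite tau_u1.
  replace (tp * (fst wv * P2 f v1 - snd wv * P1 f v1)) with (fst wv * (tp * P2 f v1) - snd wv * (tp * P1 f v1)) by ring.
  rewrite E1, E2.
  replace (kappa_g f u1 v1) with (- curvature f u1) by lra. ring.
Qed.

Hypothesis HDd : Derive (fun s => css_denom f s (tau s)) u1 <> 0.

Lemma Db_u1 : css_denom f u1 (tau u1) = 0.
Proof. rewrite tau_u1. apply Has. Qed.

Lemma isd_Db s : UB s -> is_derive (fun s => css_denom f s (tau s)) s (Derive (fun s => css_denom f s (tau s)) s).
Proof. intros H. apply Derive_correct. apply (Sm_ex_derive _ _ Sm_Db s H). Qed.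

Lemma Db_lower : exists r, 0 < r /\ forall s, Rabs (s - u1) < r ->
  Rabs (css_denom f s (tau s)) >= Rabs (Derive (fun s => css_denom f s (tau s)) u1) / 2 * Rabs (s - u1).
Proof.
  set (d := Derive (fun s => css_denom f s (tau s)) u1).
  assert (Hd : 0 < Rabs d) by (apply Rabs_pos_lt; auto).
  destruct (deriv_eps _ _ _ (isd_Db u1 UB_u1) (Rabs d / 2)) as [r [Hr H]]. lra.
  exists r. split; auto. intros s Hs. specialize (H s Hs). rewrite Db_u1 in H.
  fold d in H.
  assert (Rabs (d * (s - u1)) = Rabs d * Rabs (s - u1)) by apply Rabs_mult.
  assert (Rabs (d * (s - u1)) <= Rabs (css_denom f s (tau s)) + Rabs (css_denom f s (tau s) - 0 - d * (s - u1))).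
  { replace (d * (s - u1)) with (css_denom f s (tau s) - (css_denom f s (tau s) - 0 - d * (s - u1))) at 1 by ring.
    eapply Rle_trans. apply Rabs_triang. rewrite Rabs_Ropp. lra. }
  lra.
Qed.

Lemma Y_to_0 : forall eps, 0 < eps -> exists r, 0 < r /\ forall s, 0 < Rabs (s - u1) < r ->
  css_denom f s (tau s) <> 0 /\ Rabs (across f u1 v1 (css_point f s (tau s))) < eps.
Proof.
  intros eps He.
  set (d := Derive (fun s => css_denom f s (tau s)) u1).
  assert (Hd : 0 < Rabs d) by (apply Rabs_pos_lt; auto).
  destruct Db_lower as [r1 [Hr1 H1]].
  destruct (deriv_eps _ _ _ hY_deriv (eps * Rabs d / 4)) as [r2 [Hr2 H2]].
  assert (0 < eps * Rabs d) by (apply Rmult_lt_0_compat; lra). lra.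
  exists (Rmin r1 r2). split. apply Rmin_pos; auto.
  intros s [Hs0 Hs]. 
  assert (Hs1 : Rabs (s - u1) < r1) by (eapply Rlt_le_trans; [exact Hs|apply Rmin_l]).
  assert (Hs2 : Rabs (s - u1) < r2) by (eapply Rlt_le_trans; [exact Hs|apply Rmin_r]).
  specialize (H1 s Hs1). specialize (H2 s Hs2). fold d in H1.
  rewrite hY_u1 in H2. replace (hY s - 0 - 0 * (s - u1)) with (hY s) in H2 by ring.
  assert (HDpos : 0 < Rabs (css_denom f s (tau s))).
  { assert (0 < Rabs d / 2 * Rabs (s - u1)) by (apply Rmult_lt_0_compat; lra). lra. }
  assert (HD : css_denom f s (tau s) <> 0).
  { intro E. rewrite E, Rabs_R0 in HDpos. lra. }
  split; auto.
  rewrite across_css; auto. unfold Rdiv. rewrite Rabs_mult, Rabs_Rinv; auto.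
  apply (Rmult_lt_reg_r (Rabs (css_denom f s (tau s)))); auto.
  rewrite Rmult_assoc, Rinv_l, Rmult_1_r; [|lra].
  assert (eps * Rabs d / 4 * Rabs (s - u1) < eps * (Rabs d / 2 * Rabs (s - u1))).
  { assert (0 < eps * Rabs d * Rabs (s - u1)) by (apply Rmult_lt_0_compat; [apply Rmult_lt_0_compat|]; lra). nra. }
  assert (eps * (Rabs d / 2 * Rabs (s - u1)) <= eps * Rabs (css_denom f s (tau s))).
  { apply Rmult_le_compat_l; lra. }
  lra.
Qed.


Lemma tau_cont : continuous tau u1.
Proof. apply (Sm_cont _ _ Sm_tau). apply UB_u1. Qed.

Lemma loc_unique : exists r, 0 < r /\ forall u v, Rabs (u - u1) < r -> Rabs (v - v1) < r ->
  det (d1 f u) (d1 f v) = 0 -> v = tau u.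
Proof.
  set (c0 := P1 f u1 * Q2 f v1 - P2 f u1 * Q1 f v1).
  assert (Hc0 : c0 <> 0).
  { destruct Has as [[_ Hdet] _]. rewrite det_d1 in Hdet.
    destruct (kappas_nonzero f Hg u1 v1 Has) as [_ Hkv]. rewrite curv_eq in Hkv.
    apply (dpB_alg _ _ (P1 f v1) (P2 f v1) _ _ (NR f u1) (NR f v1)); auto.
    apply NR_pos; auto. apply NR_pos; auto. apply NR_sq; auto. apply NR_sq; auto. }
  assert (Hc0p : 0 < Rabs c0) by (apply Rabs_pos_lt; auto).
  set (M := 2 * (Rabs (P1 f u1) + Rabs (P2 f u1) + Rabs (Q1 f v1) + Rabs (Q2 f v1) + 1)).
  assert (HM : 0 < M).
  { unfold M. generalize (Rabs_pos (P1 f u1)) (Rabs_pos (P2 f u1)) (Rabs_pos (Q1 f v1)) (Rabs_pos (Q2 f v1)). lra. }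
  set (e := Rmin 1 (Rabs c0 / (2 * M))).
  assert (He : 0 < e). { apply Rmin_pos. lra. apply Rdiv_lt_0_compat; lra. }
  assert (HeM : e * M <= Rabs c0 / 2).
  { assert (e <= Rabs c0 / (2 * M)) by apply Rmin_r.
    apply (Rmult_le_compat_r M) in H; [|lra].
    replace (Rabs c0 / (2 * M) * M) with (Rabs c0 / 2) in H by (field; lra). lra. }
  destruct (cont_eps _ _ (Sm_cont _ _ (Sm_P1 f Hsm) u1 I) e He) as [d1' [Hd1 C1]].
  destruct (cont_eps _ _ (Sm_cont _ _ (Sm_P2 f Hsm) u1 I) e He) as [d2' [Hd2 C2]].
  destruct (cont_eps _ _ (Sm_cont _ _ (Sm_Q1 f Hsm) v1 I) e He) as [d3' [Hd3 C3]].
  destruct (cont_eps _ _ (Sm_cont _ _ (Sm_Q2 f Hsm) v1 I) e He) as [d4' [Hd4 C4]].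
  set (rq := Rmin d3' d4').
  assert (Hrq : 0 < rq) by (apply Rmin_pos; auto).
  destruct (cont_eps _ _ tau_cont rq Hrq) as [dt [Hdt Ct]].
  assert (Hdel := delta_pos).
  exists (Rmin (Rmin d1' d2') (Rmin rq (Rmin dt delta))).
  split. repeat apply Rmin_pos; auto.
  intros u v Hu Hv Hdet.
  assert (Hu1 : Rabs (u - u1) < d1') by (eapply Rlt_le_trans; [exact Hu|]; eapply Rle_trans; [apply Rmin_l|apply Rmin_l]).
  assert (Hu2 : Rabs (u - u1) < d2') by (eapply Rlt_le_trans; [exact Hu|]; eapply Rle_trans; [apply Rmin_l|apply Rmin_r]).
  assert (Hu3 : Rabs (u - u1) < dt) by (eapply Rlt_le_trans; [exact Hu|]; eapply Rle_trans; [apply Rmin_r|]; eapply Rle_trans; [apply Rmin_r|apply Rmin_l]).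
  assert (Hu4 : Rabs (u - u1) < delta) by (eapply Rlt_le_trans; [exact Hu|]; eapply Rle_trans; [apply Rmin_r|]; eapply Rle_trans; [apply Rmin_r|apply Rmin_r]).
  assert (Hv1 : Rabs (v - v1) < rq) by (eapply Rlt_le_trans; [exact Hv|]; eapply Rle_trans; [apply Rmin_r|apply Rmin_l]).
  assert (Htu : Rabs (tau u - v1) < rq) by (rewrite <- tau_u1; apply Ct; auto).
  set (G := fun z => P1 f u * P2 f z - P2 f u * P1 f z).
  set (G' := fun z => P1 f u * Q2 f z - P2 f u * Q1 f z).
  symmetry.
  apply (deriv_nz_inj G G' (v1 - rq) (v1 + rq)).
  - intros z _. unfold G, G'. eapply isd_val.
    apply (isd_minus (fun y => P1 f u * P2 f y) (fun y => P2 f u * P1 f y)).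
    apply (isd_mult (fun _ => P1 f u) (P2 f)). apply isd_const. apply (isd_P2 f Hsm z).
    apply (isd_mult (fun _ => P2 f u) (P1 f)). apply isd_const. apply (isd_P1 f Hsm z).
    ring.
  - intros z Hz. unfold G'.
    assert (Hz' : Rabs (z - v1) < rq) by (apply Rabs_def1; lra).
    assert (Hz3 : Rabs (z - v1) < d3') by (eapply Rlt_le_trans; [exact Hz'|apply Rmin_l]).
    assert (Hz4 : Rabs (z - v1) < d4') by (eapply Rlt_le_trans; [exact Hz'|apply Rmin_r]).
    assert (X := det_close (P1 f u) (P2 f u) (Q1 f z) (Q2 f z) (P1 f u1) (P2 f u1) (Q1 f v1) (Q2 f v1) e
       (C1 u Hu1) (C2 u Hu2) (C3 z Hz3) (C4 z Hz4) (Rmin_l _ _)).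
    fold c0 in X. fold M in X. intro E. rewrite E in X.
    replace (0 - c0) with (- c0) in X by ring. rewrite Rabs_Ropp in X. lra.
  - apply Rabs_def2 in Htu. lra.
  - apply Rabs_def2 in Hv1. lra.
  - unfold G. destruct (Hbr) as [_ [_ [Hpp _]]]. destruct (Hpp u Hu4) as [_ Hd].
    rewrite det_d1 in Hd, Hdet. lra.
Qed.

End Loc.

Lemma sgn_abs e x : e * e = 1 -> Rabs (e * x) = Rabs x.
Proof.
  intros He. rewrite Rabs_mult.
  assert (Rabs e = 1).
  { assert (Rabs e * Rabs e = 1) by (rewrite <- Rabs_mult, He; apply Rabs_R1).
    assert (0 <= Rabs e) by apply Rabs_pos. nra. }
  rewrite H; ring.
Qed.

Section Convex.
Variables X Y X1 Y1 X2 Y2 : R -> R.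
Variables u0 r e1 e2 : R.
Hypothesis Hr : 0 < r.
Hypothesis He1 : e1 * e1 = 1.
Hypothesis He2 : e2 * e2 = 1.
Let J s := u0 < s < u0 + r.
Hypothesis HdX : forall s, J s -> is_derive X s (X1 s).
Hypothesis HdY : forall s, J s -> is_derive Y s (Y1 s).
Hypothesis HdX1 : forall s, J s -> is_derive X1 s (X2 s).
Hypothesis HdY1 : forall s, J s -> is_derive Y1 s (Y2 s).
Hypothesis HX1 : forall s, J s -> 0 < e1 * X1 s.
Hypothesis Hdet : forall s, J s -> 0 < e2 * (X1 s * Y2 s - Y1 s * X2 s).
Hypothesis HY0 : forall eps, 0 < eps -> exists rho, 0 < rho /\ forall s, u0 < s < u0 + rho -> Rabs (Y s) < eps.
Hypothesis HXinf : forall M, exists rho, 0 < rho /\ forall s, u0 < s < u0 + rho -> M < Rabs (X s).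

Let phi s := Y1 s / X1 s.

Lemma X1_nz s : J s -> X1 s <> 0.
Proof. intros H E. generalize (HX1 s H). rewrite E. lra. Qed.

Lemma isd_phi s : J s -> is_derive phi s ((Y2 s * X1 s - Y1 s * X2 s) / (X1 s) ^ 2).
Proof. intros H. apply isd_div; auto. apply X1_nz; auto. Qed.

Lemma phi_incr s t : J s -> J t -> s < t -> e2 * phi s < e2 * phi t.
Proof.
  intros Hs Ht Hst.
  destruct (MVT_cor2 phi (fun z => (Y2 z * X1 z - Y1 z * X2 z) / (X1 z) ^ 2) s t Hst) as [c [Hc1 Hc2]].
  - intros c Hc. apply is_derive_Reals. apply isd_phi. unfold J in *; lra.
  - assert (Jc : J c) by (unfold J in *; lra).
    assert (Hn := X1_nz c Jc).
    assert (P : 0 < e2 * ((Y2 c * X1 c - Y1 c * X2 c) / X1 c ^ 2)).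
    { replace (e2 * ((Y2 c * X1 c - Y1 c * X2 c) / X1 c ^ 2)) with
        (e2 * (X1 c * Y2 c - Y1 c * X2 c) / (X1 c ^ 2)) by (field; auto).
      apply Rdiv_lt_0_compat. apply Hdet; auto. apply pow2_gt_0; auto. }
    assert (e2 * (phi t - phi s) = e2 * ((Y2 c * X1 c - Y1 c * X2 c) / X1 c ^ 2) * (t - s)) by (rewrite Hc1; ring).
    assert (0 < e2 * ((Y2 c * X1 c - Y1 c * X2 c) / X1 c ^ 2) * (t - s)) by (apply Rmult_lt_0_compat; lra).
    lra.
Qed.

Lemma X_incr s t : J s -> J t -> s < t -> 0 < e1 * (X t - X s).
Proof.
  intros Hs Ht Hst.
  destruct (MVT_cor2 X X1 s t Hst) as [c [Hc1 Hc2]].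
  - intros c Hc. apply is_derive_Reals. apply HdX. unfold J in *; lra.
  - rewrite Hc1. assert (Jc : J c) by (unfold J in *; lra).
    assert (H := HX1 c Jc). replace (e1 * (X1 c * (t - s))) with ((e1 * X1 c) * (t - s)) by ring.
    apply Rmult_lt_0_compat; lra.
Qed.

Lemma cauchy s t : J s -> J t -> s < t -> exists xi, s < xi < t /\ Y t - Y s = phi xi * (X t - X s).
Proof.
  intros Hs Ht Hst.
  set (H := fun z => Y z * (X t - X s) - X z * (Y t - Y s)).
  destruct (MVT_cor2 H (fun z => Y1 z * (X t - X s) - X1 z * (Y t - Y s)) s t Hst) as [c [Hc1 Hc2]].
  - intros c Hc. apply is_derive_Reals. unfold H. assert (Jc : J c) by (unfold J in *; lra).
    eapply isd_val. apply (isd_minus (fun z => Y z * (X t - X s)) (fun z => X z * (Y t - Y s))).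
    apply (isd_mult Y (fun _ => X t - X s)). apply HdY; auto. apply isd_const.
    apply (isd_mult X (fun _ => Y t - Y s)). apply HdX; auto. apply isd_const.
    ring.
  - exists c. split; auto. assert (Jc : J c) by (unfold J in *; lra).
    assert (Hn := X1_nz c Jc).
    assert (E : H t - H s = 0) by (unfold H; ring).
    rewrite E in Hc1.
    assert (E2 : Y1 c * (X t - X s) - X1 c * (Y t - Y s) = 0).
    { symmetry in Hc1. apply Rmult_integral in Hc1. destruct Hc1; auto. lra. }
    unfold phi. apply (Rmult_eq_reg_l (X1 c)); auto.
    replace (X1 c * (Y1 c / X1 c * (X t - X s))) with (Y1 c * (X t - X s)) by (field; auto). lra.
Qed.

Lemma phi_nonneg t : J t -> 0 <= e2 * phi t.
Proof.
  intros Ht. destruct (Rle_or_lt 0 (e2 * phi t)) as [h|h]; auto. exfalso.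
  set (c := - (e2 * phi t)).
  assert (Hc : 0 < c) by (unfold c; lra).
  destruct (HY0 1) as [r1 [Hr1 H1]]; [lra|].
  destruct (HXinf (Rabs (X t) + (Rabs (Y t) + 1) / c)) as [r2 [Hr2 H2]].
  set (s := u0 + Rmin (Rmin r1 r2) (t - u0) / 2).
  assert (Hm : 0 < Rmin (Rmin r1 r2) (t - u0)) by (repeat apply Rmin_pos; unfold J in *; lra).
  assert (Hm1 : Rmin (Rmin r1 r2) (t - u0) <= r1) by (eapply Rle_trans; [apply Rmin_l|apply Rmin_l]).
  assert (Hm2 : Rmin (Rmin r1 r2) (t - u0) <= r2) by (eapply Rle_trans; [apply Rmin_l|apply Rmin_r]).
  assert (Hm3 : Rmin (Rmin r1 r2) (t - u0) <= t - u0) by apply Rmin_r.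
  assert (Hs1 : u0 < s < u0 + r1) by (unfold s; lra).
  assert (Hs2 : u0 < s < u0 + r2) by (unfold s; lra).
  assert (Hst : s < t) by (unfold s; lra).
  assert (Js : J s) by (unfold J in *; unfold s; lra).
  specialize (H1 s Hs1). specialize (H2 s Hs2).
  destruct (cauchy s t Js Ht Hst) as [xi [Hxi E]].
  assert (Jxi : J xi) by (unfold J in *; lra).
  assert (Hp := phi_incr xi t Jxi Ht (proj2 Hxi)).
  assert (Hphi : c < Rabs (phi xi)).
  { rewrite <- (sgn_abs e2 (phi xi) He2). rewrite Rabs_left; unfold c; lra. }
  assert (HdXa : (Rabs (Y t) + 1) / c < Rabs (X t - X s)).
  { assert (Rabs (X s) <= Rabs (X t) + Rabs (X t - X s)).
    { replace (X s) with (X t - (X t - X s)) at 1 by ring. eapply Rle_trans. apply Rabs_triang.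
      rewrite Rabs_Ropp. lra. }
    lra. }
  assert (Hprod : Rabs (Y t) + 1 < Rabs (phi xi) * Rabs (X t - X s)).
  { assert (E1 : Rabs (Y t) + 1 = c * ((Rabs (Y t) + 1) / c)) by (field; lra).
    rewrite E1. apply Rmult_le_0_lt_compat; try lra.
    apply Rlt_le, Rdiv_lt_0_compat; [generalize (Rabs_pos (Y t)); lra | lra]. }
  rewrite <- Rabs_mult, <- E in Hprod.
  assert (Rabs (Y t - Y s) <= Rabs (Y t) + Rabs (Y s)).
  { unfold Rminus. eapply Rle_trans. apply Rabs_triang. rewrite Rabs_Ropp. lra. }
  lra.
Qed.

Lemma Y_step s t : J s -> J t -> s < t -> e1 * e2 * Y s < e1 * e2 * Y t.
Proof.
  intros Hs Ht Hst.
  destruct (cauchy s t Hs Ht Hst) as [xi [Hxi E]].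
  assert (Jxi : J xi) by (unfold J in *; lra).
  assert (P1 : 0 < e2 * phi xi).
  { assert (Hp := phi_incr s xi Hs Jxi (proj1 Hxi)). assert (Hn := phi_nonneg s Hs). lra. }
  assert (P2 := X_incr s t Hs Ht Hst).
  assert (e1 * e2 * (Y t - Y s) = (e2 * phi xi) * (e1 * (X t - X s))) by (rewrite E; ring).
  assert (0 < (e2 * phi xi) * (e1 * (X t - X s))) by (apply Rmult_lt_0_compat; auto).
  lra.
Qed.

Lemma Y_nonneg t : J t -> 0 <= e1 * e2 * Y t.
Proof.
  intros Ht. destruct (Rle_or_lt 0 (e1 * e2 * Y t)) as [h|h]; auto. exfalso.
  set (eps := - (e1 * e2 * Y t)).
  destruct (HY0 eps) as [r1 [Hr1 H1]]; [unfold eps; lra|].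
  set (s := u0 + Rmin r1 (t - u0) / 2).
  assert (Hm : 0 < Rmin r1 (t - u0)) by (repeat apply Rmin_pos; unfold J in *; lra).
  assert (Hm1 : Rmin r1 (t - u0) <= r1) by apply Rmin_l.
  assert (Hm3 : Rmin r1 (t - u0) <= t - u0) by apply Rmin_r.
  assert (Hst : s < t) by (unfold s; lra).
  assert (Js : J s) by (unfold J in *; unfold s; lra).
  assert (Hs1 : u0 < s < u0 + r1) by (unfold s; lra).
  specialize (H1 s Hs1).
  assert (Hst' := Y_step s t Js Ht Hst).
  assert (He12 : (e1 * e2) * (e1 * e2) = 1) by (replace ((e1 * e2) * (e1 * e2)) with ((e1 * e1) * (e2 * e2)) by ring; rewrite He1, He2; ring).
  assert (Rabs (e1 * e2 * Y s) = Rabs (Y s)) by (apply sgn_abs; auto).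
  assert (H3 := Rabs_maj2 (e1 * e2 * Y s)).
  unfold eps in H1. lra.
Qed.

Lemma Y_pos t : J t -> 0 < e1 * e2 * Y t.
Proof.
  intros Ht. set (s := (u0 + t) / 2).
  assert (Js : J s) by (unfold J in *; unfold s; lra).
  assert (Hst : s < t) by (unfold J in *; unfold s; lra).
  assert (A := Y_step s t Js Ht Hst). assert (B := Y_nonneg s Js). lra.
Qed.

End Convex.

Section Loc0.
Variable f : curve.
Hypothesis Hg : generic f.
Let Hcl : closed_curve f := proj1 Hg.
Let Hsm : smooth_curve f := proj1 Hcl.
Let Hreg : regular f := proj1 (proj2 Hg).
Variables u0 v0 delta : R.
Variable tau : R -> R.
Hypothesis Has : asymptotic_pair f u0 v0.
Hypothesis Hbr : local_branch f u0 v0 delta tau.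
Hypothesis HDd : Derive (fun s => css_denom f s (tau s)) u0 <> 0.
Hypothesis Hsc : forall s1 s2, u0 - delta < s1 < u0 -> u0 < s2 < u0 + delta ->
  branch_css_curv_num f tau s1 * branch_css_curv_num f tau s2 < 0.

Let w1 := fst (f v0) - fst (f u0).
Let w2 := snd (f v0) - snd (f u0).
Definition Dn s := css_denom f s (tau s).
Definition kgb s := kappa_g f s (tau s).
Definition c1 s := fst (css_point f s (tau s)).
Definition c2 s := snd (css_point f s (tau s)).
Definition Xf s := along f u0 v0 (css_point f s (tau s)).
Definition Yf s := across f u0 v0 (css_point f s (tau s)).
Definition Pn s := curvature f s * ((F1 f s - fst (f u0)) * w1 + (F2 f s - snd (f u0)) * w2)
  + kgb s * ((F1 f (tau s) - fst (f u0)) * w1 + (F2 f (tau s) - snd (f u0)) * w2).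

Lemma Xf_eq s : Xf s = (c1 s - fst (f u0)) * w1 + (c2 s - snd (f u0)) * w2.
Proof. reflexivity. Qed.
Lemma Yf_eq s : Yf s = w1 * (c2 s - snd (f u0)) - w2 * (c1 s - fst (f u0)).
Proof. reflexivity. Qed.
Lemma c1_eq s : c1 s = / Dn s * (curvature f s * F1 f s + kgb s * F1 f (tau s)).
Proof. reflexivity. Qed.
Lemma c2_eq s : c2 s = / Dn s * (curvature f s * F2 f s + kgb s * F2 f (tau s)).
Proof. reflexivity. Qed.

Lemma Xf_Pn s : Dn s <> 0 -> Xf s = Pn s / Dn s.
Proof.
  intros H. rewrite Xf_eq, c1_eq, c2_eq. unfold Pn, Dn, kgb in *. unfold css_denom in *.
  unfold F1, F2. field. auto.
Qed.

Definition W2 := w1 * w1 + w2 * w2.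
Lemma W2_pos : 0 < W2.
Proof.
  destruct Has as [[Hne _] _]. unfold W2, w1, w2.
  destruct (Req_dec (fst (f v0) - fst (f u0)) 0) as [h1|h1].
  - destruct (Req_dec (snd (f v0) - snd (f u0)) 0) as [h2|h2].
    + exfalso. apply Hne. destruct (f u0), (f v0). simpl in *. f_equal; lra.
    + rewrite h1. assert (0 < (snd (f v0) - snd (f u0)) * (snd (f v0) - snd (f u0))) by (apply Rsqr_pos_lt; auto). lra.
  - assert (0 < (fst (f v0) - fst (f u0)) * (fst (f v0) - fst (f u0))) by (apply Rsqr_pos_lt; auto).
    assert (0 <= (snd (f v0) - snd (f u0)) * (snd (f v0) - snd (f u0))) by apply Rle_0_sqr. lra.
Qed.

Definition Pn0 := Pn u0.
Lemma Pn0_eq : Pn0 = - curvature f u0 * W2.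
Proof.
  unfold Pn0, Pn, kgb. rewrite (tau_u1 f u0 v0 delta tau Hbr).
  destruct Has as [_ HD]. unfold css_denom in HD.
  replace (kappa_g f u0 v0) with (- curvature f u0) by lra.
  unfold F1, F2, W2, w1, w2. ring.
Qed.
Lemma Pn0_nz : Pn0 <> 0.
Proof.
  rewrite Pn0_eq. destruct (kappas_nonzero f Hg u0 v0 Has) as [H _].
  assert (W := W2_pos). intro E. apply Rmult_integral in E. destruct E as [E|E]; lra.
Qed.

Let UBu := UB u0 delta.
Let HUB : open UBu := open_UB u0 delta.

Lemma Sm_kgb : Sm UBu kgb.
Proof. apply (Sm_kg f Hg u0 v0 delta tau Hbr). Qed.
Lemma Sm_Dn : Sm UBu Dn.
Proof. apply (Sm_Db f Hg u0 v0 delta tau Hbr). Qed.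

Lemma Sm_Pn : Sm UBu Pn.
Proof.
  intros n.
  pose proof (Sm_TT_UB u0 delta _ (Sm_K f Hsm Hreg) n) as HK.
  pose proof (Sm_TT_UB u0 delta _ (Sm_F1 f Hsm) n) as HF1.
  pose proof (Sm_TT_UB u0 delta _ (Sm_F2 f Hsm) n) as HF2.
  pose proof (Sm_ctau f u0 v0 delta tau Hbr _ (Sm_F1 f Hsm) n) as HF1t.
  pose proof (Sm_ctau f u0 v0 delta tau Hbr _ (Sm_F2 f Hsm) n) as HF2t.
  pose proof (Sm_kgb n) as Hkg.
  unfold Pn. ckt HUB.
Qed.

Lemma Sm_c_on (V : R -> Prop) : open V -> (forall s, V s -> UBu s /\ Dn s <> 0) -> Sm V c1 /\ Sm V c2.
Proof.
  intros HV Hsub. split; intros n.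
  - apply (Ck_ext V HV n (fun s => / Dn s * (curvature f s * F1 f s + kgb s * F1 f (tau s)))).
    intros; symmetry; apply c1_eq.
    pose proof (Ck_sub n _ V _ (fun s H => proj1 (Hsub s H)) (Sm_TT_UB u0 delta _ (Sm_K f Hsm Hreg) n)) as HK.
    pose proof (Ck_sub n _ V _ (fun s H => proj1 (Hsub s H)) (Sm_TT_UB u0 delta _ (Sm_F1 f Hsm) n)) as HF1.
    pose proof (Ck_sub n _ V _ (fun s H => proj1 (Hsub s H)) (Sm_ctau f u0 v0 delta tau Hbr _ (Sm_F1 f Hsm) n)) as HF1t.
    pose proof (Ck_sub n _ V _ (fun s H => proj1 (Hsub s H)) (Sm_kgb n)) as Hkg.
    pose proof (Ck_sub n _ V _ (fun s H => proj1 (Hsub s H)) (Sm_Dn n)) as HD.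
    ckt HV. intros; apply Hsub; auto.
  - apply (Ck_ext V HV n (fun s => / Dn s * (curvature f s * F2 f s + kgb s * F2 f (tau s)))).
    intros; symmetry; apply c2_eq.
    pose proof (Ck_sub n _ V _ (fun s H => proj1 (Hsub s H)) (Sm_TT_UB u0 delta _ (Sm_K f Hsm Hreg) n)) as HK.
    pose proof (Ck_sub n _ V _ (fun s H => proj1 (Hsub s H)) (Sm_TT_UB u0 delta _ (Sm_F2 f Hsm) n)) as HF1.
    pose proof (Ck_sub n _ V _ (fun s H => proj1 (Hsub s H)) (Sm_ctau f u0 v0 delta tau Hbr _ (Sm_F2 f Hsm) n)) as HF1t.
    pose proof (Ck_sub n _ V _ (fun s H => proj1 (Hsub s H)) (Sm_kgb n)) as Hkg.
    pose proof (Ck_sub n _ V _ (fun s H => proj1 (Hsub s H)) (Sm_Dn n)) as HD.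
    ckt HV. intros; apply Hsub; auto.
Qed.


Definition dD := Derive Dn u0.
Definition Nq s := Derive Pn s * Dn s - Pn s * Derive Dn s.

Lemma Dn_u0 : Dn u0 = 0.
Proof. apply (Db_u1 f u0 v0 delta tau Has Hbr). Qed.
Lemma UB_u0 : UBu u0.
Proof. apply (UB_u1 f u0 v0 delta tau Hbr). Qed.
Lemma Nq_u0 : Nq u0 = - Pn0 * dD.
Proof. unfold Nq. rewrite Dn_u0. unfold Pn0, dD. ring. Qed.
Lemma Nq_u0_nz : Nq u0 <> 0.
Proof. rewrite Nq_u0. intro E. apply Rmult_integral in E. destruct E as [E|E].
  apply Pn0_nz; lra. apply HDd. exact E. Qed.

Lemma good_radius : exists r0, 0 < r0 /\ r0 <= delta /\ forall s, 0 < Rabs (s - u0) < r0 ->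
  Rabs (Dn s - dD * (s - u0)) <= Rabs dD / 2 * Rabs (s - u0) /\
  Rabs (Pn s - Pn0) < Rabs Pn0 / 2 /\ 0 < Nq s * Nq u0.
Proof.
  assert (HdD : 0 < Rabs dD) by (apply Rabs_pos_lt; exact HDd).
  assert (HP0 : 0 < Rabs Pn0) by (apply Rabs_pos_lt; exact Pn0_nz).
  assert (HN0 : 0 < Rabs (Nq u0)) by (apply Rabs_pos_lt; exact Nq_u0_nz).
  destruct (deriv_eps _ _ _ (isd_Db f Hg u0 v0 delta tau Hbr u0 UB_u0) (Rabs dD / 2)) as [rA [HrA HA]]. lra.
  destruct (cont_eps _ _ (Sm_cont _ _ Sm_Pn u0 UB_u0) (Rabs Pn0 / 2)) as [rB [HrB HB]]. lra.
  set (M := 2 * (Rabs (Derive Pn u0) + Rabs (Pn u0) + Rabs (Derive Dn u0) + Rabs (Dn u0) + 1)).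
  assert (HM : 0 < M).
  { unfold M. generalize (Rabs_pos (Derive Pn u0)) (Rabs_pos (Pn u0)) (Rabs_pos (Derive Dn u0)) (Rabs_pos (Dn u0)). lra. }
  set (e := Rmin 1 (Rabs (Nq u0) / (2 * M))).
  assert (He : 0 < e). { apply Rmin_pos. lra. apply Rdiv_lt_0_compat; lra. }
  assert (HeM : e * M <= Rabs (Nq u0) / 2).
  { assert (e <= Rabs (Nq u0) / (2 * M)) by apply Rmin_r.
    apply (Rmult_le_compat_r M) in H; [|lra].
    replace (Rabs (Nq u0) / (2 * M) * M) with (Rabs (Nq u0) / 2) in H by (field; lra). lra. }
  destruct (cont_eps _ _ (Sm_cont _ _ (Sm_Derive _ _ Sm_Pn) u0 UB_u0) e He) as [r1 [Hr1 C1]].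
  destruct (cont_eps _ _ (Sm_cont _ _ Sm_Pn u0 UB_u0) e He) as [r2 [Hr2 C2]].
  destruct (cont_eps _ _ (Sm_cont _ _ (Sm_Derive _ _ Sm_Dn) u0 UB_u0) e He) as [r3 [Hr3 C3]].
  destruct (cont_eps _ _ (Sm_cont _ _ Sm_Dn u0 UB_u0) e He) as [r4 [Hr4 C4]].
  assert (Hdel : 0 < delta) by apply (delta_pos f u0 v0 delta tau Hbr).
  set (r0 := Rmin (Rmin (Rmin rA rB) (Rmin r1 r2)) (Rmin (Rmin r3 r4) delta)).
  assert (Hr0 : 0 < r0) by (unfold r0; repeat apply Rmin_pos; auto).
  assert (L : forall z, Rabs z < r0 -> Rabs z < rA /\ Rabs z < rB /\ Rabs z < r1 /\ Rabs z < r2 /\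
     Rabs z < r3 /\ Rabs z < r4 /\ Rabs z < delta).
  { intros z Hz. unfold r0 in Hz.
    repeat match type of Hz with
    | Rabs z < Rmin ?a ?b => assert (Rabs z < a) by (eapply Rlt_le_trans; [exact Hz|apply Rmin_l]);
                              assert (Rabs z < b) by (eapply Rlt_le_trans; [exact Hz|apply Rmin_r]); clear Hz
    end.
    repeat match goal with
    | H : Rabs z < Rmin ?a ?b |- _ => assert (Rabs z < a) by (eapply Rlt_le_trans; [exact H|apply Rmin_l]);
                              assert (Rabs z < b) by (eapply Rlt_le_trans; [exact H|apply Rmin_r]); clear H
    end.
    repeat split; assumption. }
  exists r0. split; auto. split. unfold r0; eapply Rle_trans; [apply Rmin_r|apply Rmin_r].
  intros s [Hs0 Hs]. destruct (L _ Hs) as [LA [LB [L1 [L2 [L3 [L4 _]]]]]].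
  split; [|split].
  - specialize (HA s LA). rewrite (Db_u1 f u0 v0 delta tau Has Hbr) in HA.
    change (Derive (fun s => css_denom f s (tau s)) u0) with dD in HA. unfold Dn.
    replace (css_denom f s (tau s) - dD * (s - u0)) with (css_denom f s (tau s) - 0 - dD * (s - u0)) by ring. exact HA.
  - apply HB; auto.
  - assert (X := det_close (Derive Pn s) (Pn s) (Derive Dn s) (Dn s) (Derive Pn u0) (Pn u0) (Derive Dn u0) (Dn u0) e
       (C1 s L1) (C2 s L2) (C3 s L3) (C4 s L4) (Rmin_l _ _)).
    fold M in X. fold (Nq s) in X. fold (Nq u0) in X.
    assert (Rabs (Nq s - Nq u0) < Rabs (Nq u0)) by lra.
    destruct (Rlt_or_le 0 (Nq u0)) as [h|h].
    + rewrite (Rabs_pos_eq (Nq u0)) in H by lra. apply Rabs_def2 in H. apply Rmult_lt_0_compat; lra.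
    + assert (Nq u0 < 0) by (generalize Nq_u0_nz; lra).
      rewrite (Rabs_left (Nq u0)) in H by lra. apply Rabs_def2 in H. nra.
Qed.


Definition r0 : R := proj1_sig (constructive_indefinite_description _ good_radius).
Lemma r0_spec : 0 < r0 /\ r0 <= delta /\ forall s, 0 < Rabs (s - u0) < r0 ->
  Rabs (Dn s - dD * (s - u0)) <= Rabs dD / 2 * Rabs (s - u0) /\
  Rabs (Pn s - Pn0) < Rabs Pn0 / 2 /\ 0 < Nq s * Nq u0.
Proof. apply (proj2_sig (constructive_indefinite_description _ good_radius)). Qed.

Lemma r0_pos : 0 < r0. Proof. apply r0_spec. Qed.

Definition PN s := 0 < Rabs (s - u0) < r0.

Lemma PN_UB s : PN s -> UBu s.
Proof.
  intros [_ H]. destruct r0_spec as [_ [H2 _]]. unfold UBu, UB. apply Rabs_def2 in H. lra.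
Qed.

Lemma PN_Dn s : PN s -> 0 < Dn s * (dD * (s - u0)).
Proof.
  intros H. destruct r0_spec as [_ [_ H3]]. destruct (H3 s H) as [A _].
  apply close_pos2. rewrite Rabs_mult. lra.
  apply Rmult_integral_contrapositive. split. exact HDd. destruct H as [H _].
  intro E. rewrite E, Rabs_R0 in H. lra.
Qed.
Lemma PN_Dn_nz s : PN s -> Dn s <> 0.
Proof. intros H E. generalize (PN_Dn s H). rewrite E. lra. Qed.
Lemma PN_Pn s : PN s -> 0 < Pn s * Pn0.
Proof.
  intros H. destruct r0_spec as [_ [_ H3]]. destruct (H3 s H) as [_ [B _]].
  apply close_pos. assert (0 < Rabs Pn0) by (apply Rabs_pos_lt; apply Pn0_nz). lra.
Qed.
Lemma PN_Nq s : PN s -> 0 < Nq s * Nq u0.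
Proof. intros H. destruct r0_spec as [_ [_ H3]]. apply (H3 s H). Qed.

Definition e1 := sgn (Nq u0).
Lemma e1_sq : e1 * e1 = 1. Proof. apply sgn_sq. Qed.
Lemma e1_Nq s : PN s -> 0 < e1 * Nq s.
Proof.
  intros H. assert (A := PN_Nq s H). assert (B := sgn_pos _ Nq_u0_nz). fold e1 in B.
  apply (pos_reg _ (e1 * Nq u0)); auto.
  replace (e1 * Nq s * (e1 * Nq u0)) with ((e1 * e1) * (Nq s * Nq u0)) by ring. rewrite e1_sq. lra.
Qed.

Lemma Xf_sign s : PN s -> 0 < Xf s * (Pn0 * dD * (s - u0)).
Proof.
  intros H. rewrite Xf_Pn by (apply PN_Dn_nz; auto).
  assert (A := PN_Pn s H). assert (B := PN_Dn s H). assert (C := PN_Dn_nz s H).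
  replace (Pn s / Dn s * (Pn0 * dD * (s - u0))) with ((Pn s * Pn0) * (Dn s * (dD * (s - u0))) / (Dn s * Dn s))
    by (field; auto).
  apply Rdiv_lt_0_compat. apply Rmult_lt_0_compat; auto. apply Rsqr_pos_lt; auto.
Qed.

Lemma e1_val : 0 < e1 * (- Pn0 * dD).
Proof. rewrite <- Nq_u0. apply sgn_pos, Nq_u0_nz. Qed.

Lemma Xf_right s : PN s -> u0 < s -> 0 < - e1 * Xf s.
Proof.
  intros H Hs. assert (A := Xf_sign s H). assert (B := e1_val).
  apply (pos_reg _ (e1 * (- Pn0 * dD) * (s - u0))).
  replace (- e1 * Xf s * (e1 * (- Pn0 * dD) * (s - u0))) with ((e1 * e1) * (Xf s * (Pn0 * dD * (s - u0)))) by ring.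
  rewrite e1_sq. lra. apply Rmult_lt_0_compat; lra.
Qed.

Lemma Xf_left s : PN s -> s < u0 -> 0 < e1 * Xf s.
Proof.
  intros H Hs. assert (A := Xf_sign s H). assert (B := e1_val).
  apply (pos_reg _ (e1 * (- Pn0 * dD) * (u0 - s))).
  replace (e1 * Xf s * (e1 * (- Pn0 * dD) * (u0 - s))) with ((e1 * e1) * (Xf s * (Pn0 * dD * (s - u0)))) by ring.
  rewrite e1_sq. lra. apply Rmult_lt_0_compat; lra.
Qed.

Lemma Xf_inf : forall M, exists rho, 0 < rho /\ forall s, 0 < Rabs (s - u0) < rho -> M < Rabs (Xf s).
Proof.
  intros M.
  assert (HdD : 0 < Rabs dD) by (apply Rabs_pos_lt; exact HDd).
  assert (HP0 : 0 < Rabs Pn0) by (apply Rabs_pos_lt; exact Pn0_nz).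
  set (K := (Rabs M + 1) * (3 / 2 * Rabs dD)).
  assert (HK : 0 < K) by (unfold K; apply Rmult_lt_0_compat; generalize (Rabs_pos M); lra).
  exists (Rmin r0 (Rabs Pn0 / 2 / K)). split. apply Rmin_pos. apply r0_pos. apply Rdiv_lt_0_compat; lra.
  intros s [Hs0 Hs].
  assert (Hs1 : Rabs (s - u0) < r0) by (eapply Rlt_le_trans; [exact Hs|apply Rmin_l]).
  assert (Hs2 : Rabs (s - u0) < Rabs Pn0 / 2 / K) by (eapply Rlt_le_trans; [exact Hs|apply Rmin_r]).
  assert (HPN : PN s) by (split; auto).
  destruct r0_spec as [_ [_ H3]]. destruct (H3 s HPN) as [A [B _]].
  assert (HDn := PN_Dn_nz s HPN).
  assert (HDa : 0 < Rabs (Dn s)) by (apply Rabs_pos_lt; auto).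
  assert (A' : Rabs (Dn s) <= 3 / 2 * Rabs dD * Rabs (s - u0)).
  { assert (Rabs (Dn s) <= Rabs (Dn s - dD * (s - u0)) + Rabs (dD * (s - u0))).
    { replace (Dn s) with ((Dn s - dD * (s - u0)) + dD * (s - u0)) at 1 by ring. apply Rabs_triang. }
    rewrite Rabs_mult in H. lra. }
  assert (B' : Rabs Pn0 / 2 < Rabs (Pn s)).
  { assert (Rabs Pn0 <= Rabs (Pn s) + Rabs (Pn s - Pn0)).
    { replace Pn0 with (Pn s - (Pn s - Pn0)) at 1 by ring. eapply Rle_trans. apply Rabs_triang. rewrite Rabs_Ropp. lra. }
    lra. }
  rewrite Xf_Pn by auto. unfold Rdiv. rewrite Rabs_mult, Rabs_Rinv by auto.
  apply (Rmult_lt_reg_r (Rabs (Dn s))); auto. rewrite Rmult_assoc, Rinv_l, Rmult_1_r by lra.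
  assert (K * Rabs (s - u0) < Rabs Pn0 / 2).
  { apply (Rmult_lt_compat_l K) in Hs2; auto. replace (K * (Rabs Pn0 / 2 / K)) with (Rabs Pn0 / 2) in Hs2 by (field; lra). lra. }
  assert ((Rabs M + 1) * Rabs (Dn s) <= K * Rabs (s - u0)).
  { unfold K. replace ((Rabs M + 1) * (3 / 2 * Rabs dD) * Rabs (s - u0)) with ((Rabs M + 1) * (3 / 2 * Rabs dD * Rabs (s - u0))) by ring.
    apply Rmult_le_compat_l; auto. generalize (Rabs_pos M); lra. }
  assert (M * Rabs (Dn s) <= Rabs M * Rabs (Dn s)) by (apply Rmult_le_compat_r; [lra|apply Rle_abs]).
  lra.
Qed.


Definition X1 s := Derive c1 s * w1 + Derive c2 s * w2.
Definition X2 s := Derive (Derive c1) s * w1 + Derive (Derive c2) s * w2.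
Definition Y1 s := w1 * Derive c2 s - w2 * Derive c1 s.
Definition Y2 s := w1 * Derive (Derive c2) s - w2 * Derive (Derive c1) s.

Lemma Jside_ok a b : u0 - r0 <= a -> b <= u0 + r0 -> (a < u0 < b -> False) ->
  forall s, a < s < b -> UBu s /\ Dn s <> 0.
Proof.
  intros Ha Hb Hn s Hs. assert (HP : PN s).
  { split. apply Rabs_pos_lt. intro E. assert (s = u0) by lra. subst. apply Hn. lra.
    apply Rabs_def1; lra. }
  split. apply PN_UB; auto. apply PN_Dn_nz; auto.
Qed.

Lemma PN_int s : PN s -> exists a b, u0 - r0 <= a /\ b <= u0 + r0 /\ (a < u0 < b -> False) /\ a < s < b.
Proof.
  intros [H0 H]. apply Rabs_def2 in H. destruct (Rlt_or_le s u0) as [h|h].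
  - exists (u0 - r0), u0. repeat split; try lra.
  - assert (s <> u0) by (intro E; subst; rewrite Rminus_diag_eq, Rabs_R0 in H0; lra).
    exists u0, (u0 + r0). repeat split; try lra.
Qed.

Lemma derivs s : PN s ->
  is_derive Xf s (X1 s) /\ is_derive Yf s (Y1 s) /\ is_derive X1 s (X2 s) /\ is_derive Y1 s (Y2 s).
Proof.
  intros HP. destruct (PN_int s HP) as [a [b [Ha [Hb [Hn Hs]]]]].
  destruct (Sm_c_on (fun s => a < s < b) (open_int a b) (Jside_ok a b Ha Hb Hn)) as [S1 S2].
  assert (E1 := Derive_correct _ _ (Sm_ex_derive _ _ S1 s Hs)).
  assert (E2 := Derive_correct _ _ (Sm_ex_derive _ _ S2 s Hs)).
  assert (E3 := Derive_correct _ _ (Sm_ex_derive _ _ (Sm_Derive _ _ S1) s Hs)).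
  assert (E4 := Derive_correct _ _ (Sm_ex_derive _ _ (Sm_Derive _ _ S2) s Hs)).
  split; [|split; [|split]].
  - apply (isd_ext (fun s => (c1 s - fst (f u0)) * w1 + (c2 s - snd (f u0)) * w2)). intros; symmetry; apply Xf_eq.
    eapply isd_val. apply isd_plus; (apply isd_mult; [apply isd_minus; [|apply isd_const]|apply isd_const]).
    exact E1. exact E2. unfold X1. ring.
  - apply (isd_ext (fun s => w1 * (c2 s - snd (f u0)) - w2 * (c1 s - fst (f u0)))). intros; symmetry; apply Yf_eq.
    eapply isd_val. apply isd_minus; (apply isd_mult; [apply isd_const|apply isd_minus; [|apply isd_const]]).
    exact E2. exact E1. unfold Y1. ring.
  - unfold X1 at 1. eapply isd_val. apply isd_plus; (apply isd_mult; [|apply isd_const]).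
    exact E3. exact E4. unfold X2. ring.
  - unfold Y1 at 1. eapply isd_val. apply isd_minus; (apply isd_mult; [apply isd_const|]).
    exact E4. exact E3. unfold Y2. ring.
Qed.

Lemma X1_Nq s : PN s -> X1 s = Nq s / Dn s ^ 2.
Proof.
  intros HP. destruct (PN_int s HP) as [a [b [Ha [Hb [Hn Hs]]]]].
  destruct (derivs s HP) as [D1 _].
  apply (isd_unique Xf s); auto.
  apply (is_derive_ext_loc (fun y => Pn y / Dn y)).
  - apply (filter_imp (fun y => a < y < b)). intros y Hy. symmetry. apply Xf_Pn.
    apply (Jside_ok a b Ha Hb Hn); auto. apply locally_int; auto.
  - unfold Nq. apply isd_div. apply Derive_correct. apply (Sm_ex_derive _ _ Sm_Pn). apply PN_UB; auto.
    apply Derive_correct. apply (Sm_ex_derive _ _ Sm_Dn). apply PN_UB; auto.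
    apply PN_Dn_nz; auto.
Qed.

Lemma e1_X1 s : PN s -> 0 < e1 * X1 s.
Proof.
  intros HP. rewrite X1_Nq; auto. assert (A := e1_Nq s HP). assert (B := PN_Dn_nz s HP).
  replace (e1 * (Nq s / Dn s ^ 2)) with ((e1 * Nq s) / (Dn s * Dn s)) by (field; auto).
  apply Rdiv_lt_0_compat; auto. apply Rsqr_pos_lt; auto.
Qed.

Definition bcn s := branch_css_curv_num f tau s.
Lemma bcn_eq s : bcn s = Derive c1 s * Derive (Derive c2) s - Derive c2 s * Derive (Derive c1) s.
Proof. reflexivity. Qed.
Lemma det_bcn s : X1 s * Y2 s - Y1 s * X2 s = W2 * bcn s.
Proof. rewrite bcn_eq. unfold X1, X2, Y1, Y2, W2. ring. Qed.

Definition e2r := - sgn (bcn (u0 - delta / 2)).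
Lemma e2r_sq : e2r * e2r = 1.
Proof. unfold e2r. replace (- sgn (bcn (u0 - delta / 2)) * - sgn (bcn (u0 - delta / 2))) with
  (sgn (bcn (u0 - delta / 2)) * sgn (bcn (u0 - delta / 2))) by ring. apply sgn_sq. Qed.

Lemma bcn_right s : u0 < s < u0 + delta -> 0 < e2r * bcn s.
Proof.
  intros Hs. assert (Hd := delta_pos f u0 v0 delta tau Hbr).
  assert (H := Hsc (u0 - delta / 2) s ltac:(lra) Hs). fold (bcn (u0 - delta/2)) in H. fold (bcn s) in H.
  assert (Hnz : bcn (u0 - delta / 2) <> 0) by (intro E; rewrite E in H; lra).
  assert (P := sgn_pos _ Hnz). unfold e2r.
  apply (pos_reg _ (sgn (bcn (u0 - delta / 2)) * bcn (u0 - delta / 2))); auto.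
  replace (- sgn (bcn (u0 - delta / 2)) * bcn s * (sgn (bcn (u0 - delta / 2)) * bcn (u0 - delta / 2)))
    with (- (sgn (bcn (u0 - delta / 2)) * sgn (bcn (u0 - delta / 2))) * (bcn (u0 - delta / 2) * bcn s)) by ring.
  rewrite sgn_sq. lra.
Qed.

Lemma bcn_left s : u0 - delta < s < u0 -> 0 < - e2r * bcn s.
Proof.
  intros Hs. assert (Hd := delta_pos f u0 v0 delta tau Hbr).
  assert (H := Hsc s (u0 + delta / 2) Hs ltac:(lra)). fold (bcn s) in H. fold (bcn (u0 + delta/2)) in H.
  assert (P := bcn_right (u0 + delta / 2) ltac:(lra)).
  apply (pos_reg _ (e2r * bcn (u0 + delta / 2))); auto.
  replace (- e2r * bcn s * (e2r * bcn (u0 + delta / 2))) with (- (e2r * e2r) * (bcn s * bcn (u0 + delta / 2))) by ring.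
  rewrite e2r_sq. lra.
Qed.


Lemma r0_le_delta : r0 <= delta. Proof. apply r0_spec. Qed.

Lemma PN_right s : u0 < s < u0 + r0 -> PN s.
Proof. intros H. split. apply Rabs_pos_lt; lra. apply Rabs_def1; lra. Qed.
Lemma PN_left s : u0 - r0 < s < u0 -> PN s.
Proof. intros H. split. apply Rabs_pos_lt; lra. apply Rabs_def1; lra. Qed.

Lemma Y0_right : forall eps, 0 < eps -> exists rho, 0 < rho /\ forall s, u0 < s < u0 + rho -> Rabs (Yf s) < eps.
Proof.
  intros eps He. destruct (Y_to_0 f Hg u0 v0 delta tau Has Hbr HDd eps He) as [rho [Hr H]].
  exists rho. split; auto. intros s Hs. apply H. split. apply Rabs_pos_lt; lra. apply Rabs_def1; lra.
Qed.
Lemma Xinf_right : forall M, exists rho, 0 < rho /\ forall s, u0 < s < u0 + rho -> M < Rabs (Xf s).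
Proof.
  intros M. destruct (Xf_inf M) as [rho [Hr H]].
  exists rho. split; auto. intros s Hs. apply H. split. apply Rabs_pos_lt; lra. apply Rabs_def1; lra.
Qed.

Lemma Y_right s : u0 < s < u0 + r0 -> 0 < e1 * e2r * Yf s.
Proof.
  intros Hs.
  apply (Y_pos Xf Yf X1 Y1 X2 Y2 u0 r0 e1 e2r r0_pos e1_sq e2r_sq); auto.
  - intros t Ht. apply (derivs t (PN_right t Ht)).
  - intros t Ht. apply (derivs t (PN_right t Ht)).
  - intros t Ht. apply (derivs t (PN_right t Ht)).
  - intros t Ht. apply (derivs t (PN_right t Ht)).
  - intros t Ht. apply e1_X1, PN_right; auto.
  - intros t Ht. rewrite det_bcn. assert (W := W2_pos). assert (Hrd := r0_le_delta).
    assert (B := bcn_right t ltac:(lra)).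
    replace (e2r * (W2 * bcn t)) with (W2 * (e2r * bcn t)) by ring. apply Rmult_lt_0_compat; auto.
  - apply Y0_right.
  - apply Xinf_right.
Qed.

Lemma isd_refl (g : R -> R) dg t : is_derive g (2 * u0 - t) dg -> is_derive (fun y => g (2 * u0 - y)) t (- dg).
Proof.
  intros H. eapply isd_val. apply (isd_comp g (fun y => 2 * u0 - y)). exact H.
  apply (isd_minus (fun _ => 2 * u0) (fun y => y)). apply isd_const. apply isd_id. ring.
Qed.

Lemma Y_left s : u0 - r0 < s < u0 -> 0 < - e1 * e2r * Yf s.
Proof.
  intros Hs.
  assert (E : s = 2 * u0 - (2 * u0 - s)) by ring. rewrite E.
  apply (Y_pos (fun t => Xf (2 * u0 - t)) (fun t => Yf (2 * u0 - t)) (fun t => - X1 (2 * u0 - t))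
     (fun t => - Y1 (2 * u0 - t)) (fun t => X2 (2 * u0 - t)) (fun t => Y2 (2 * u0 - t)) u0 r0 (- e1) e2r r0_pos); auto.
  - replace (- e1 * - e1) with (e1 * e1) by ring. apply e1_sq.
  - apply e2r_sq.
  - intros t Ht. apply isd_refl. apply (derivs _ (PN_left (2 * u0 - t) ltac:(lra))).
  - intros t Ht. apply isd_refl. apply (derivs _ (PN_left (2 * u0 - t) ltac:(lra))).
  - intros t Ht. eapply isd_val. apply (isd_opp (fun y => X1 (2 * u0 - y))). apply isd_refl.
    apply (derivs _ (PN_left (2 * u0 - t) ltac:(lra))). ring.
  - intros t Ht. eapply isd_val. apply (isd_opp (fun y => Y1 (2 * u0 - y))). apply isd_refl.
    apply (derivs _ (PN_left (2 * u0 - t) ltac:(lra))). ring.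
  - intros t Ht. replace (- e1 * - X1 (2 * u0 - t)) with (e1 * X1 (2 * u0 - t)) by ring.
    apply e1_X1, PN_left; lra.
  - intros t Ht. 
    replace (- X1 (2 * u0 - t) * Y2 (2 * u0 - t) - - Y1 (2 * u0 - t) * X2 (2 * u0 - t))
      with (- (X1 (2 * u0 - t) * Y2 (2 * u0 - t) - Y1 (2 * u0 - t) * X2 (2 * u0 - t))) by ring.
    rewrite det_bcn. assert (W := W2_pos). assert (Hrd := r0_le_delta).
    assert (B := bcn_left (2 * u0 - t) ltac:(lra)).
    replace (e2r * - (W2 * bcn (2 * u0 - t))) with (W2 * (- e2r * bcn (2 * u0 - t))) by ring.
    apply Rmult_lt_0_compat; auto.
  - intros eps He. destruct (Y_to_0 f Hg u0 v0 delta tau Has Hbr HDd eps He) as [rho [Hr H]].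
    exists rho. split; auto. intros t Ht. apply H. split. apply Rabs_pos_lt; lra. apply Rabs_def1; lra.
  - intros M. destruct (Xf_inf M) as [rho [Hr H]].
    exists rho. split; auto. intros t Ht. apply H. split. apply Rabs_pos_lt; lra. apply Rabs_def1; lra.
  - lra.
Qed.

Definition eps0 := - e2r.
Lemma eps0_pm : eps0 = 1 \/ eps0 = -1.
Proof. unfold eps0, e2r. destruct (sgn_pm (bcn (u0 - delta / 2))) as [h|h]; rewrite h; [left|right]; ring. Qed.

Lemma side_sign s : PN s -> 0 < eps0 * Xf s * Yf s.
Proof.
  intros HP. destruct HP as [H0 H]. apply Rabs_def2 in H.
  destruct (Rlt_or_le s u0) as [h|h].
  - assert (A := Y_left s ltac:(lra)). assert (B := Xf_left s (conj H0 (Rabs_def1 _ _ (proj1 H) (proj2 H))) h).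
    assert (0 < (- e1 * e2r * Yf s) * (e1 * Xf s)) by (apply Rmult_lt_0_compat; auto).
    replace (eps0 * Xf s * Yf s) with ((- e1 * e2r * Yf s) * (e1 * Xf s)). auto.
    unfold eps0. replace ((- e1 * e2r * Yf s) * (e1 * Xf s)) with (- (e1 * e1) * e2r * Xf s * Yf s) by ring.
    rewrite e1_sq. ring.
  - assert (h' : u0 < s). { destruct (Req_dec s u0) as [E|E]. subst. rewrite Rminus_diag_eq, Rabs_R0 in H0; lra. lra. }
    assert (A := Y_right s ltac:(lra)). assert (B := Xf_right s (conj H0 (Rabs_def1 _ _ (proj1 H) (proj2 H))) h').
    assert (0 < (e1 * e2r * Yf s) * (- e1 * Xf s)) by (apply Rmult_lt_0_compat; auto).
    replace (eps0 * Xf s * Yf s) with ((e1 * e2r * Yf s) * (- e1 * Xf s)). auto.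
    unfold eps0. replace ((e1 * e2r * Yf s) * (- e1 * Xf s)) with (- (e1 * e1) * e2r * Xf s * Yf s) by ring.
    rewrite e1_sq. ring.
Qed.


Lemma ends : forall M eta, 0 < eta -> exists s1 s2, PN s1 /\ PN s2 /\ M < Xf s1 /\ Xf s2 < - M /\
  Rabs (Yf s1) < eta /\ Rabs (Yf s2) < eta.
Proof.
  intros M eta He.
  destruct (Y_to_0 f Hg u0 v0 delta tau Has Hbr HDd eta He) as [r1 [Hr1 H1]].
  destruct (Xf_inf (Rabs M)) as [r2 [Hr2 H2]].
  assert (Hr0 := r0_pos).
  set (rho := Rmin (Rmin r1 r2) r0 / 2).
  assert (Hm : 0 < Rmin (Rmin r1 r2) r0) by (repeat apply Rmin_pos; auto).
  assert (Hm1 : Rmin (Rmin r1 r2) r0 <= r1) by (eapply Rle_trans; [apply Rmin_l|apply Rmin_l]).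
  assert (Hm2 : Rmin (Rmin r1 r2) r0 <= r2) by (eapply Rle_trans; [apply Rmin_l|apply Rmin_r]).
  assert (Hm3 : Rmin (Rmin r1 r2) r0 <= r0) by apply Rmin_r.
  assert (AR : 0 < Rabs (u0 + rho - u0) < Rmin (Rmin r1 r2) r0).
  { replace (u0 + rho - u0) with rho by ring. rewrite Rabs_pos_eq; unfold rho; lra. }
  assert (AL : 0 < Rabs (u0 - rho - u0) < Rmin (Rmin r1 r2) r0).
  { replace (u0 - rho - u0) with (- rho) by ring. rewrite Rabs_Ropp, Rabs_pos_eq; unfold rho; lra. }
  assert (PR : PN (u0 + rho)) by (split; lra).
  assert (PL : PN (u0 - rho)) by (split; lra).
  assert (YR := proj2 (H1 (u0 + rho) ltac:(lra))).
  assert (YL := proj2 (H1 (u0 - rho) ltac:(lra))).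
  assert (XR := H2 (u0 + rho) ltac:(lra)).
  assert (XL := H2 (u0 - rho) ltac:(lra)).
  assert (SR := Xf_right (u0 + rho) PR ltac:(unfold rho; lra)).
  assert (SL := Xf_left (u0 - rho) PL ltac:(unfold rho; lra)).
  assert (HM1 := Rle_abs M). assert (HM2 := Rabs_maj2 M).
  unfold e1 in SR, SL. destruct (sgn_pm (Nq u0)) as [h|h]; rewrite h in SR, SL.
  - exists (u0 - rho), (u0 + rho). split; [exact PL|split; [exact PR|split; [|split; [|split; auto]]]].
    + rewrite (Rabs_pos_eq (Xf (u0 - rho))) in XL by lra. lra.
    + rewrite (Rabs_left (Xf (u0 + rho))) in XR by lra. lra.
  - exists (u0 + rho), (u0 - rho). split; [exact PR|split; [exact PL|split; [|split; [|split; auto]]]].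
    + rewrite (Rabs_pos_eq (Xf (u0 + rho))) in XR by lra. lra.
    + rewrite (Rabs_left (Xf (u0 - rho))) in XL by lra. lra.
Qed.

Lemma Xf_cont s : PN s -> continuity_pt (fun t => Rabs (Xf t)) s.
Proof.
  intros HP. apply (continuity_pt_comp Xf Rabs). 
  apply continuity_pt_filterlim. apply exd_cont. exists (X1 s). apply (derivs s HP).
  apply Rcontinuity_abs.
Qed.

Lemma bound_away : forall rho, 0 < rho -> exists B, forall s, rho <= Rabs (s - u0) <= r0 / 2 -> Rabs (Xf s) <= B.
Proof.
  intros rho Hrho. assert (Hr0 := r0_pos).
  destruct (Rle_or_lt rho (r0 / 2)) as [h|h].
  - destruct (continuity_ab_maj (fun t => Rabs (Xf t)) (u0 + rho) (u0 + r0 / 2)) as [m1 [Hm1 _]]. lra.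
    { intros c Hc. apply Xf_cont. split. apply Rabs_pos_lt; lra. apply Rabs_def1; lra. }
    destruct (continuity_ab_maj (fun t => Rabs (Xf t)) (u0 - r0 / 2) (u0 - rho)) as [m2 [Hm2 _]]. lra.
    { intros c Hc. apply Xf_cont. split. apply Rabs_pos_lt; lra. apply Rabs_def1; lra. }
    exists (Rmax (Rabs (Xf m1)) (Rabs (Xf m2))). intros s [Hs1 Hs2].
    destruct (Rle_or_lt u0 s) as [k|k].
    + rewrite Rabs_pos_eq in Hs1, Hs2 by lra. eapply Rle_trans. apply Hm1. lra. apply Rmax_l.
    + rewrite Rabs_left in Hs1, Hs2 by lra. eapply Rle_trans. apply Hm2. lra. apply Rmax_r.
  - exists 0. intros s Hs. lra.
Qed.

End Loc0.

Definition Lq (u : nat -> R) (l : R) := is_lim_seq u l.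

Lemma Lq_eps u l : Lq u l -> forall eps, 0 < eps -> exists N, forall n, (N <= n)%nat -> Rabs (u n - l) < eps.
Proof.
  intros H eps He. apply is_lim_seq_spec in H. destruct (H (mkposreal eps He)) as [N HN].
  exists N. intros n Hn. apply HN. exact Hn.
Qed.

Lemma Lq_of_eps u l : (forall eps, 0 < eps -> exists N, forall n, (N <= n)%nat -> Rabs (u n - l) < eps) -> Lq u l.
Proof.
  intros H. apply is_lim_seq_spec. intros eps. destruct (H eps (cond_pos eps)) as [N HN].
  exists N. intros n Hn. apply HN. exact Hn.
Qed.

Lemma Lq_plus u v a b : Lq u a -> Lq v b -> Lq (fun n => u n + v n) (a + b).
Proof. apply is_lim_seq_plus'. Qed.
Lemma Lq_minus u v a b : Lq u a -> Lq v b -> Lq (fun n => u n - v n) (a - b).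
Proof. apply is_lim_seq_minus'. Qed.
Lemma Lq_mult u v a b : Lq u a -> Lq v b -> Lq (fun n => u n * v n) (a * b).
Proof. apply is_lim_seq_mult'. Qed.
Lemma Lq_const c : Lq (fun _ => c) c.
Proof. apply is_lim_seq_const. Qed.
Lemma Lq_opp u a : Lq u a -> Lq (fun n => - u n) (- a).
Proof. intros H. apply (is_lim_seq_opp u a) in H. exact H. Qed.
Lemma Lq_inv u a : Lq u a -> a <> 0 -> Lq (fun n => / u n) (/ a).
Proof. intros H Ha. apply (is_lim_seq_inv u a) in H. exact H. intro E. apply Ha. injection E; auto. Qed.
Lemma Lq_div u v a b : Lq u a -> Lq v b -> b <> 0 -> Lq (fun n => u n / v n) (a / b).
Proof. intros. apply Lq_mult; auto. apply Lq_inv; auto. Qed.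
Lemma Lq_cont (g : R -> R) u a : continuous g a -> Lq u a -> Lq (fun n => g (u n)) (g a).
Proof. intros Hg H. apply is_lim_seq_continuous; auto. apply continuity_pt_filterlim. exact Hg. Qed.
Lemma Lq_ext u v a : (forall n, u n = v n) -> Lq u a -> Lq v a.
Proof. intros E H. apply (is_lim_seq_ext u v); auto. Qed.
Lemma Lq_unique u a b : Lq u a -> Lq u b -> a = b.
Proof.
  intros H1 H2. apply is_lim_seq_unique in H1. apply is_lim_seq_unique in H2.
  rewrite H1 in H2. injection H2; auto.
Qed.
Lemma Lq_const_eq u c a : (forall n, u n = c) -> Lq u a -> a = c.
Proof. intros E H. apply (Lq_unique u); auto. apply (Lq_ext (fun _ => c)); auto. apply Lq_const. Qed.

Lemma Lq_subseq u a (phi : nat -> nat) : (forall k, (k <= phi k)%nat) -> Lq u a -> Lq (fun k => u (phi k)) a.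
Proof.
  intros Hphi H. apply Lq_of_eps. intros eps He. destruct (Lq_eps u a H eps He) as [N HN].
  exists N. intros n Hn. apply HN. specialize (Hphi n). lia.
Qed.

Lemma Lq_bounded u a : Lq u a -> exists N, forall n, (N <= n)%nat -> Rabs (u n) <= Rabs a + 1.
Proof.
  intros H. destruct (Lq_eps u a H 1) as [N HN]. lra. exists N. intros n Hn.
  specialize (HN n Hn). replace (u n) with ((u n - a) + a) by ring.
  eapply Rle_trans. apply Rabs_triang. lra.
Qed.

Lemma incr_ge (phi : nat -> nat) : (forall k, (phi k < phi (S k))%nat) -> forall k, (k <= phi k)%nat.
Proof. intros H k. induction k. lia. specialize (H k). lia. Qed.

Lemma incr_mono (phi : nat -> nat) : (forall k, (phi k < phi (S k))%nat) -> forall k m, (k <= m)%nat -> (phi k <= phi m)%nat.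
Proof. intros H k m Hkm. induction Hkm. lia. specialize (H m). lia. Qed.

Lemma extract1 (u : nat -> R) a b : (forall n, a <= u n <= b) ->
  exists phi : nat -> nat, (forall k, (phi k < phi (S k))%nat) /\ exists l, a <= l <= b /\ Lq (fun k => u (phi k)) l.
Proof.
  intros Hab.
  destruct (Bolzano_Weierstrass u (fun c => a <= c <= b) (compact_P3 a b) Hab) as [l Hl].
  assert (Hl' : forall (k N : nat), exists p, (N <= p)%nat /\ Rabs (u p - l) < / INR (S k)).
  { intros k N. destruct (Hl (fun y => Rabs (y - l) < / INR (S k)) N) as [p [Hp1 Hp2]].
    - assert (Hpos : 0 < / INR (S k)) by (apply Rinv_0_lt_compat, lt_0_INR; lia).
      exists (mkposreal _ Hpos). intros y Hy. unfold disc in Hy. simpl in Hy. exact Hy.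
    - exists p; auto. }
  set (g := fun k N => proj1_sig (constructive_indefinite_description _ (Hl' k N))).
  assert (Hg : forall k N, (N <= g k N)%nat /\ Rabs (u (g k N) - l) < / INR (S k)).
  { intros k N. unfold g. apply (proj2_sig (constructive_indefinite_description _ (Hl' k N))). }
  set (phi := fix phi k := match k with O => g O O | S k' => g (S k') (S (phi k')) end).
  assert (Hphi : forall k, (phi k < phi (S k))%nat).
  { intros k. simpl. destruct (Hg (S k) (S (phi k))). lia. }
  assert (Hclose : forall k, Rabs (u (phi k) - l) < / INR (S k)).
  { intros [|k]; simpl; apply Hg. }
  exists phi. split; auto. exists l. split.
  - destruct (Rle_or_lt a l) as [h1|h1]; [destruct (Rle_or_lt l b) as [h2|h2]; [lra|]|].
    + exfalso. destruct (Hl (fun y => Rabs (y - l) < l - b) O) as [p [_ Hp]].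
      exists (mkposreal (l - b) ltac:(lra)). intros y Hy. exact Hy.
      specialize (Hab p). apply Rabs_def2 in Hp. lra.
    + exfalso. destruct (Hl (fun y => Rabs (y - l) < a - l) O) as [p [_ Hp]].
      exists (mkposreal (a - l) ltac:(lra)). intros y Hy. exact Hy.
      specialize (Hab p). apply Rabs_def2 in Hp. lra.
  - apply Lq_of_eps. intros eps He.
    destruct (archimed_cor1 eps He) as [N [HN1 HN2]].
    exists N. intros n Hn. eapply Rlt_trans. apply Hclose.
    eapply Rle_lt_trans; [|exact HN1].
    apply Rinv_le_contravar. apply lt_0_INR; lia. apply le_INR. lia.
Qed.

Lemma extract2 (u v : nat -> R) : (forall n, 0 <= u n <= 1 /\ 0 <= v n <= 1) ->
  exists phi : nat -> nat, (forall k, (k <= phi k)%nat) /\ exists l1 l2, 0 <= l1 <= 1 /\ 0 <= l2 <= 1 /\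
    Lq (fun k => u (phi k)) l1 /\ Lq (fun k => v (phi k)) l2.
Proof.
  intros H.
  destruct (extract1 u 0 1) as [p1 [Hp1 [l1 [Hl1 L1]]]]. intros; apply H.
  destruct (extract1 (fun k => v (p1 k)) 0 1) as [p2 [Hp2 [l2 [Hl2 L2]]]]. intros; apply H.
  exists (fun k => p1 (p2 k)). split.
  - intros k. assert (A := incr_ge p2 Hp2 k). assert (B := incr_ge p1 Hp1 (p2 k)). lia.
  - exists l1, l2. repeat split; try apply Hl1; try apply Hl2; auto.
    apply (Lq_subseq (fun k => u (p1 k)) l1 p2); auto. apply incr_ge; auto.
Qed.
Lemma Lq_val u a b : Lq u a -> a = b -> Lq u b.
Proof. intros H E; subst; auto. Qed.

Lemma pt_neq_W (a b : pt) : a <> b -> 0 < dot (psub b a) (psub b a).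
Proof.
  intros H. unfold dot, psub. simpl. destruct a as [a1 a2], b as [b1 b2]. simpl.
  destruct (Req_dec (b1 - a1) 0) as [h1|h1].
  - destruct (Req_dec (b2 - a2) 0) as [h2|h2].
    + exfalso. apply H. f_equal; lra.
    + rewrite h1. assert (0 < (b2 - a2) * (b2 - a2)) by (apply Rsqr_pos_lt; auto). lra.
  - assert (0 < (b1 - a1) * (b1 - a1)) by (apply Rsqr_pos_lt; auto).
    assert (0 <= (b2 - a2) * (b2 - a2)) by apply Rle_0_sqr. lra.
Qed.

Lemma linelim (a b a' b' : pt) (x : nat -> pt) : a <> b -> a' <> b' ->
  Lq (fun k => det (psub b a) (psub (x k) a)) 0 ->
  Lq (fun k => det (psub b' a') (psub (x k) a')) 0 ->
  (forall k, INR k < Rabs (dot (psub (x k) a) (psub b a))) ->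
  det (psub b' a') (psub b a) = 0 /\ det (psub b' a') (psub a' a) = 0.
Proof.
  intros Hab Hab' LD LF HE.
  set (w := psub b a). set (w' := psub b' a').
  assert (Hw := pt_neq_W a b Hab). fold w in Hw.
  set (Dk := fun k => det w (psub (x k) a)).
  set (Ek := fun k => dot (psub (x k) a) w).
  set (Fk := fun k => det w' (psub (x k) a)).
  assert (EF : forall k, Fk k = det w' (psub (x k) a') + det w' (psub a' a)).
  { intros k. unfold Fk, det, psub. simpl. ring. }
  assert (LF' : Lq Fk (det w' (psub a' a))).
  { apply (Lq_ext (fun k => det w' (psub (x k) a') + det w' (psub a' a))). intros; symmetry; apply EF.
    eapply Lq_val. apply Lq_plus. exact LF. apply Lq_const. ring. }
  assert (Id : forall k, Fk k * dot w w = det w' w * Ek k + dot w' w * Dk k).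
  { intros k. unfold Fk, Ek, Dk, det, dot, psub. simpl. ring. }
  assert (L2 : Lq (fun k => det w' w * Ek k) (det w' (psub a' a) * dot w w - dot w' w * 0)).
  { apply (Lq_ext (fun k => Fk k * dot w w - dot w' w * Dk k)).
    intros k. rewrite Id. ring.
    apply Lq_minus. apply Lq_mult. exact LF'. apply Lq_const. apply Lq_mult. apply Lq_const. exact LD. }
  assert (H1 : det w' w = 0).
  { destruct (Req_dec (det w' w) 0) as [h|h]; auto. exfalso.
    destruct (Lq_bounded _ _ L2) as [N HN].
    set (B := Rabs (det w' (psub a' a) * dot w w - dot w' w * 0) + 1).
    destruct (archimed (B / Rabs (det w' w))) as [Hu _].
    set (k := max N (Z.to_nat (up (B / Rabs (det w' w))))).
    assert (Hk1 : (N <= k)%nat) by lia.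
    specialize (HN k Hk1). fold B in HN. specialize (HE k). fold w in HE. fold (Ek k) in HE.
    rewrite Rabs_mult in HN.
    assert (Hd : 0 < Rabs (det w' w)) by (apply Rabs_pos_lt; auto).
    assert (Hkk : B / Rabs (det w' w) < INR k).
    { eapply Rlt_le_trans. exact Hu.
      assert (IZR (up (B / Rabs (det w' w))) <= INR (Z.to_nat (up (B / Rabs (det w' w))))).
      { destruct (Z_le_gt_dec 0 (up (B / Rabs (det w' w)))) as [z|z].
        - rewrite INR_IZR_INZ, Z2Nat.id; auto. lra.
        - assert (IZR (up (B / Rabs (det w' w))) < 0) by (apply IZR_lt; lia). generalize (pos_INR (Z.to_nat (up (B / Rabs (det w' w))))). lra. }
      eapply Rle_trans. exact H. apply le_INR. lia. }
    assert (B < Rabs (det w' w) * INR k).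
    { apply (Rmult_lt_compat_l (Rabs (det w' w))) in Hkk; auto.
      replace (Rabs (det w' w) * (B / Rabs (det w' w))) with B in Hkk by (field; lra). lra. }
    assert (Rabs (det w' w) * INR k < Rabs (det w' w) * Rabs (Ek k)) by (apply Rmult_lt_compat_l; auto).
    lra. }
  split; auto.
  assert (L3 : Lq (fun k => Fk k * dot w w) (dot w' w * 0)).
  { apply (Lq_ext (fun k => dot w' w * Dk k)). intros k. rewrite Id, H1. ring.
    apply Lq_mult. apply Lq_const. exact LD. }
  assert (L4 : Lq (fun k => Fk k * dot w w) (det w' (psub a' a) * dot w w)).
  { apply Lq_mult. exact LF'. apply Lq_const. }
  assert (E := Lq_unique _ _ _ L3 L4).
  rewrite Rmult_0_r in E. symmetry in E. apply Rmult_integral in E. destruct E; auto. lra.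
Qed.

Lemma same_line_of (a b a' b' : pt) : a <> b -> a' <> b' ->
  det (psub b' a') (psub b a) = 0 -> det (psub b' a') (psub a' a) = 0 -> same_line a' b' a b.
Proof.
  intros Hab Hab' H1 H2 z. unfold on_line.
  set (w := psub b a) in *. set (w' := psub b' a') in *.
  assert (Hw := pt_neq_W a b Hab). assert (Hw' := pt_neq_W a' b' Hab'). fold w in Hw. fold w' in Hw'.
  assert (Hdot : dot w' w <> 0).
  { intro E. assert (L : dot w' w * dot w' w + det w' w * det w' w = dot w' w' * dot w w)
      by (unfold dot, det; ring).
    rewrite E, H1 in L. assert (0 < dot w' w' * dot w w) by (apply Rmult_lt_0_compat; auto). lra. }
  assert (E1 : det w' (psub z a') = det w' (psub z a) - det w' (psub a' a)) by (unfold det, psub; simpl; ring).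
  rewrite H2, Rminus_0_r in E1.
  assert (Id : det w' (psub z a) * dot w w = det w' w * dot w (psub z a) + dot w' w * det w (psub z a))
    by (unfold det, dot, psub; simpl; ring).
  rewrite H1, Rmult_0_l, Rplus_0_l in Id.
  rewrite E1. split; intros H.
  - rewrite H, Rmult_0_l in Id. symmetry in Id. apply Rmult_integral in Id. destruct Id; auto. contradiction.
  - rewrite H, Rmult_0_r in Id. apply Rmult_integral in Id. destruct Id; auto. lra.
Qed.

Lemma conv_bound k1 k2 a b : k1 * k2 < 0 -> Rabs ((k1 * a - k2 * b) / (k1 - k2)) <= Rmax (Rabs a) (Rabs b).
Proof.
  intros H.
  assert (Hn : k1 - k2 <> 0) by (intro E; assert (k1 = k2) by lra; subst; nra).
  unfold Rdiv. rewrite Rabs_mult, Rabs_Rinv by auto.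
  apply (Rmult_le_reg_r (Rabs (k1 - k2))). apply Rabs_pos_lt; auto.
  rewrite Rmult_assoc, Rinv_l, Rmult_1_r by (apply Rabs_no_R0; auto).
  assert (Ma := Rmax_l (Rabs a) (Rabs b)). assert (Mb := Rmax_r (Rabs a) (Rabs b)).
  assert (E : Rabs (k1 - k2) = Rabs k1 + Rabs k2).
  { destruct (Rlt_or_le 0 k1) as [h|h].
    - assert (k2 < 0) by nra. rewrite (Rabs_pos_eq k1), (Rabs_left k2), Rabs_pos_eq; lra.
    - assert (k1 < 0) by (destruct (Req_dec k1 0); [subst; lra | lra]). assert (0 < k2) by nra.
      rewrite (Rabs_left k1), (Rabs_pos_eq k2), Rabs_left; lra. }
  rewrite E.
  eapply Rle_trans. unfold Rminus. apply Rabs_triang. rewrite Rabs_Ropp, !Rabs_mult.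
  assert (0 <= Rabs k1) by apply Rabs_pos. assert (0 <= Rabs k2) by apply Rabs_pos.
  assert (Rabs k1 * Rabs a <= Rabs k1 * Rmax (Rabs a) (Rabs b)) by (apply Rmult_le_compat_l; auto).
  assert (Rabs k2 * Rabs b <= Rabs k2 * Rmax (Rabs a) (Rabs b)) by (apply Rmult_le_compat_l; auto).
  lra.
Qed.

Section Diag.
Variable f : curve.
Hypothesis Hg : generic f.
Let Hcl : closed_curve f := proj1 Hg.
Let Hsm : smooth_curve f := proj1 Hcl.
Let Hreg : regular f := proj1 (proj2 Hg).

Definition dotp u z := P1 f u * P1 f z + P2 f u * P2 f z.

Lemma G_trick u v : u <> v -> (forall z, Rmin u v <= z <= Rmax u v -> 0 < dotp u z) ->
  det (d1 f u) (d1 f v) = 0 -> exists xi, Rmin u v < xi < Rmax u v /\ curvature f xi = 0.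
Proof.
  intros Huv Hdot Hdet.
  set (G := fun z => (P1 f u * P2 f z - P2 f u * P1 f z) / dotp u z).
  set (G' := fun z => ((P1 f u * Q2 f z - P2 f u * Q1 f z) * dotp u z -
                      (P1 f u * P2 f z - P2 f u * P1 f z) * (P1 f u * Q1 f z + P2 f u * Q2 f z)) / (dotp u z) ^ 2).
  assert (Hab : Rmin u v < Rmax u v).
  { unfold Rmin, Rmax. destruct (Rle_dec u v); lra. }
  assert (Hder : forall c, Rmin u v <= c <= Rmax u v -> derivable_pt_lim G c (G' c)).
  { intros c Hc. apply is_derive_Reals. unfold G, G', dotp.
    eapply isd_val. apply isd_div.
    - apply (isd_minus (fun z => P1 f u * P2 f z) (fun z => P2 f u * P1 f z)).
      apply (isd_mult (fun _ => P1 f u) (P2 f)). apply isd_const. apply (isd_P2 f Hsm c).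
      apply (isd_mult (fun _ => P2 f u) (P1 f)). apply isd_const. apply (isd_P1 f Hsm c).
    - apply (isd_plus (fun z => P1 f u * P1 f z) (fun z => P2 f u * P2 f z)).
      apply (isd_mult (fun _ => P1 f u) (P1 f)). apply isd_const. apply (isd_P1 f Hsm c).
      apply (isd_mult (fun _ => P2 f u) (P2 f)). apply isd_const. apply (isd_P2 f Hsm c).
    - specialize (Hdot c Hc). unfold dotp in Hdot. lra.
    - unfold Rdiv. ring. }
  destruct (MVT_cor2 G G' (Rmin u v) (Rmax u v) Hab Hder) as [c [Hc1 Hc2]].
  exists c. split; auto.
  assert (Gu : G u = 0). { unfold G. replace (P1 f u * P2 f u - P2 f u * P1 f u) with 0 by ring. unfold Rdiv; ring. }
  assert (Gv : G v = 0). { unfold G. rewrite det_d1 in Hdet. rewrite Hdet. unfold Rdiv; ring. }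
  assert (GG : G (Rmax u v) - G (Rmin u v) = 0).
  { unfold Rmin, Rmax. destruct (Rle_dec u v); rewrite Gu, Gv; ring. }
  rewrite GG in Hc1.
  assert (HG' : G' c = 0). { symmetry in Hc1. apply Rmult_integral in Hc1. destruct Hc1; auto. lra. }
  assert (Hd := Hdot c ltac:(lra)).
  unfold G' in HG'.
  assert (Num : ((P1 f u * Q2 f c - P2 f u * Q1 f c) * dotp u c -
     (P1 f u * P2 f c - P2 f u * P1 f c) * (P1 f u * Q1 f c + P2 f u * Q2 f c)) = 0).
  { apply (Rmult_eq_reg_r (/ dotp u c ^ 2)). rewrite Rmult_0_l. exact HG'.
    apply Rinv_neq_0_compat. apply pow_nonzero. lra. }
  assert (Id : ((P1 f u * Q2 f c - P2 f u * Q1 f c) * dotp u c -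
     (P1 f u * P2 f c - P2 f u * P1 f c) * (P1 f u * Q1 f c + P2 f u * Q2 f c)) =
     (P1 f u * P1 f u + P2 f u * P2 f u) * (P1 f c * Q2 f c - P2 f c * Q1 f c)) by (unfold dotp; ring).
  rewrite Id in Num. assert (Hp := dot_pos f Hreg u).
  apply Rmult_integral in Num. destruct Num as [N|N]. lra.
  rewrite curv_eq, N. unfold Rdiv. ring.
Qed.


Lemma dot_nbhd s0 : exists r, 0 < r /\ forall u z, Rabs (u - s0) < r -> Rabs (z - s0) < r -> 0 < dotp u z.
Proof.
  set (c0 := dotp s0 s0).
  assert (Hc0 : 0 < c0) by (unfold c0, dotp; apply dot_pos; auto).
  set (M := 2 * (Rabs (P1 f s0) + Rabs (- P2 f s0) + Rabs (P2 f s0) + Rabs (P1 f s0) + 1)).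
  assert (HM : 0 < M).
  { unfold M. generalize (Rabs_pos (P1 f s0)) (Rabs_pos (- P2 f s0)) (Rabs_pos (P2 f s0)). lra. }
  set (e := Rmin 1 (c0 / (2 * M))).
  assert (He : 0 < e). { apply Rmin_pos. lra. apply Rdiv_lt_0_compat; lra. }
  assert (HeM : e * M <= c0 / 2).
  { assert (e <= c0 / (2 * M)) by apply Rmin_r.
    apply (Rmult_le_compat_r M) in H; [|lra].
    replace (c0 / (2 * M) * M) with (c0 / 2) in H by (field; lra). lra. }
  destruct (cont_eps _ _ (Sm_cont _ _ (Sm_P1 f Hsm) s0 I) e He) as [d1' [Hd1 C1]].
  destruct (cont_eps _ _ (Sm_cont _ _ (Sm_P2 f Hsm) s0 I) e He) as [d2' [Hd2 C2]].
  exists (Rmin d1' d2'). split. apply Rmin_pos; auto.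
  intros u z Hu Hz.
  assert (Hu1 : Rabs (u - s0) < d1') by (eapply Rlt_le_trans; [exact Hu|apply Rmin_l]).
  assert (Hu2 : Rabs (u - s0) < d2') by (eapply Rlt_le_trans; [exact Hu|apply Rmin_r]).
  assert (Hz1 : Rabs (z - s0) < d1') by (eapply Rlt_le_trans; [exact Hz|apply Rmin_l]).
  assert (Hz2 : Rabs (z - s0) < d2') by (eapply Rlt_le_trans; [exact Hz|apply Rmin_r]).
  assert (N2 : Rabs (- P2 f u - - P2 f s0) < e).
  { replace (- P2 f u - - P2 f s0) with (- (P2 f u - P2 f s0)) by ring. rewrite Rabs_Ropp. apply C2; auto. }
  assert (X := det_close (P1 f u) (- P2 f u) (P2 f z) (P1 f z) (P1 f s0) (- P2 f s0) (P2 f s0) (P1 f s0) e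
     (C1 u Hu1) N2 (C2 z Hz2) (C1 z Hz1) (Rmin_l _ _)).
  fold M in X.
  replace (P1 f u * P1 f z - - P2 f u * P2 f z) with (dotp u z) in X by (unfold dotp; ring).
  replace (P1 f s0 * P1 f s0 - - P2 f s0 * P2 f s0) with c0 in X by (unfold c0, dotp; ring).
  assert (X' : Rabs (dotp u z - c0) < c0) by lra.
  apply Rabs_def2 in X'. lra.
Qed.


Lemma between_close u v z s0 r : Rabs (u - s0) < r -> Rabs (v - s0) < r -> Rmin u v <= z <= Rmax u v ->
  Rabs (z - s0) < r.
Proof.
  intros Hu Hv Hz. apply Rabs_def2 in Hu. apply Rabs_def2 in Hv. apply Rabs_def1;
  unfold Rmin, Rmax in Hz; destruct (Rle_dec u v); lra.
Qed.

Lemma along_css u0 v0 u v : css_denom f u v <> 0 ->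
  along f u0 v0 (css_point f u v) =
  (curvature f u * along f u0 v0 (f u) + kappa_g f u v * along f u0 v0 (f v)) / css_denom f u v.
Proof.
  intros H. unfold along, css_point, dot, psub, pscal, padd. simpl.
  unfold css_denom in *. field. auto.
Qed.

Lemma along_f_cont u0 v0 z : continuous (fun s => along f u0 v0 (f s)) z.
Proof.
  apply (continuous_ext_loc (T:=R_UniformSpace) (U:=R_UniformSpace) _
    (fun s => (F1 f s - fst (f u0)) * (fst (f v0) - fst (f u0)) + (F2 f s - snd (f u0)) * (snd (f v0) - snd (f u0)))).
  apply filter_forall. intros; reflexivity.
  apply exd_cont. apply exd_plus; apply ex_derive_mult; try apply ex_derive_const.
  apply (ex_derive_minus (V:=R_NormedModule)). apply (Sm_ex_derive _ _ (Sm_F1 f Hsm)); exact I. apply ex_derive_const.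
  apply (ex_derive_minus (V:=R_NormedModule)). apply (Sm_ex_derive _ _ (Sm_F2 f Hsm)); exact I. apply ex_derive_const.
Qed.

Lemma diag u0 v0 s0 (U W : nat -> R) : Lq U s0 -> Lq W s0 ->
  (forall k, parallel_pair f (U k) (W k)) -> (forall k, css_denom f (U k) (W k) <> 0) ->
  exists B N, forall k, (N <= k)%nat -> Rabs (along f u0 v0 (css_point f (U k) (W k))) <= B.
Proof.
  intros LU LW Hpp HD.
  destruct (dot_nbhd s0) as [r1 [Hr1 Hdn]].
  destruct (Req_dec (curvature f s0) 0) as [Hk0|Hk0].
  -
    set (kp := Derive (curvature f) s0).
    assert (Hkp : kp <> 0).
    { apply (proj1 (proj2 (proj2 (proj2 Hg)))). exact Hk0. }
    assert (Hkpa : 0 < Rabs kp) by (apply Rabs_pos_lt; auto).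
    assert (Hkd : is_derive (curvature f) s0 kp).
    { apply Derive_correct. apply (Sm_ex_derive _ _ (Sm_K f Hsm Hreg)). exact I. }
    destruct (deriv_eps _ _ _ Hkd (Rabs kp / 2)) as [r2 [Hr2 HK]]. lra.
    assert (Ksign : forall z, 0 < Rabs (z - s0) < r2 -> 0 < curvature f z * (kp * (z - s0))).
    { intros z [Hz0 Hz]. specialize (HK z Hz). rewrite Hk0 in HK. apply close_pos2.
      rewrite Rabs_mult. replace (curvature f z - kp * (z - s0)) with (curvature f z - 0 - kp * (z - s0)) by ring. lra.
      apply Rmult_integral_contrapositive. split; auto. intro E. rewrite E, Rabs_R0 in Hz0. lra. }
    set (r := Rmin r1 r2). assert (Hr : 0 < r) by (apply Rmin_pos; auto).
    destruct (Lq_eps U s0 LU r Hr) as [N1 HN1].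
    destruct (Lq_eps W s0 LW r Hr) as [N2 HN2].
    set (A0 := along f u0 v0 (f s0)).
    destruct (Lq_bounded _ _ (Lq_cont _ U s0 (along_f_cont u0 v0 s0) LU)) as [N3 HN3].
    destruct (Lq_bounded _ _ (Lq_cont _ W s0 (along_f_cont u0 v0 s0) LW)) as [N4 HN4].
    exists (Rabs A0 + 1), (max (max N1 N2) (max N3 N4)). intros k Hk.
    assert (h1 := HN1 k ltac:(lia)). assert (h2 := HN2 k ltac:(lia)).
    assert (h3 := HN3 k ltac:(lia)). assert (h4 := HN4 k ltac:(lia)).
    assert (h1a : Rabs (U k - s0) < r1) by (eapply Rlt_le_trans; [exact h1|apply Rmin_l]).
    assert (h1b : Rabs (U k - s0) < r2) by (eapply Rlt_le_trans; [exact h1|apply Rmin_r]).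
    assert (h2a : Rabs (W k - s0) < r1) by (eapply Rlt_le_trans; [exact h2|apply Rmin_l]).
    assert (h2b : Rabs (W k - s0) < r2) by (eapply Rlt_le_trans; [exact h2|apply Rmin_r]).
    destruct (Hpp k) as [Hne Hdet].
    assert (Hneq : U k <> W k) by (intro E; apply Hne; rewrite E; auto).
    destruct (G_trick (U k) (W k) Hneq) as [xi [Hxi Kxi]]; auto.
    { intros z Hz. apply Hdn; auto. apply (between_close (U k) (W k)); auto. }
    assert (Hxs : xi = s0).
    { destruct (Req_dec xi s0) as [E|E]; auto. exfalso.
      assert (Hxr : Rabs (xi - s0) < r2) by (apply (between_close (U k) (W k)); auto; lra).
      assert (P := Ksign xi (conj (Rabs_pos_lt (xi - s0) ltac:(intro; apply E; lra)) Hxr)). rewrite Kxi in P. lra. }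
    subst xi.
    assert (HUs : U k <> s0) by (intro E; rewrite E in Hxi; unfold Rmin, Rmax in Hxi; destruct (Rle_dec s0 (W k)); lra).
    assert (HWs : W k <> s0) by (intro E; rewrite E in Hxi; unfold Rmin, Rmax in Hxi; destruct (Rle_dec (U k) s0); lra).
    assert (Hopp : (U k - s0) * (W k - s0) < 0).
    { unfold Rmin, Rmax in Hxi. destruct (Rle_dec (U k) (W k)); nra. }
    assert (KU := Ksign (U k) (conj (Rabs_pos_lt (U k - s0) ltac:(intro; apply HUs; lra)) h1b)).
    assert (KW := Ksign (W k) (conj (Rabs_pos_lt (W k - s0) ltac:(intro; apply HWs; lra)) h2b)).
    assert (Hkk : curvature f (U k) * curvature f (W k) < 0).
    { assert (P : 0 < (curvature f (U k) * (kp * (U k - s0))) * (curvature f (W k) * (kp * (W k - s0))))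
        by (apply Rmult_lt_0_compat; auto).
      replace ((curvature f (U k) * (kp * (U k - s0))) * (curvature f (W k) * (kp * (W k - s0)))) with
        ((curvature f (U k) * curvature f (W k)) * ((kp * kp) * ((U k - s0) * (W k - s0)))) in P by ring.
      assert (0 < kp * kp) by (apply Rsqr_pos_lt; auto).
      assert ((kp * kp) * ((U k - s0) * (W k - s0)) < 0) by (apply Rmult_pos_neg; auto).
      destruct (Rlt_or_le (curvature f (U k) * curvature f (W k)) 0) as [q|q]; auto. nra. }
    assert (Hsig : sig f (U k) (W k) = 1).
    { assert (S := sig_sq f Hsm Hreg (U k) (W k) Hdet).
      assert (Sp : 0 < sig f (U k) (W k)).
      { unfold sig. apply Rdiv_lt_0_compat. apply (Hdn (U k) (W k)); auto.
        apply Rmult_lt_0_compat; apply NR_pos; auto. }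
      nra. }
    rewrite along_css by auto. unfold css_denom. rewrite kappa_g_sig, Hsig.
    replace (curvature f (U k) * along f u0 v0 (f (U k)) + - (1) * curvature f (W k) * along f u0 v0 (f (W k)))
      with (curvature f (U k) * along f u0 v0 (f (U k)) - curvature f (W k) * along f u0 v0 (f (W k))) by ring.
    replace (curvature f (U k) + - (1) * curvature f (W k)) with (curvature f (U k) - curvature f (W k)) by ring.
    eapply Rle_trans. apply conv_bound; auto.
    apply Rmax_lub; auto.
  - (* not an inflexion : no parallel pairs nearby *)
    assert (Hka : 0 < Rabs (curvature f s0)) by (apply Rabs_pos_lt; auto).
    destruct (cont_eps _ _ (Sm_cont _ _ (Sm_K f Hsm Hreg) s0 I) _ Hka) as [r2 [Hr2 HK]].
    set (r := Rmin r1 r2). assert (Hr : 0 < r) by (apply Rmin_pos; auto).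
    destruct (Lq_eps U s0 LU r Hr) as [N1 HN1].
    destruct (Lq_eps W s0 LW r Hr) as [N2 HN2].
    exfalso.
    set (k := max N1 N2).
    assert (h1 := HN1 k ltac:(lia)). assert (h2 := HN2 k ltac:(lia)).
    assert (h1a : Rabs (U k - s0) < r1) by (eapply Rlt_le_trans; [exact h1|apply Rmin_l]).
    assert (h1b : Rabs (U k - s0) < r2) by (eapply Rlt_le_trans; [exact h1|apply Rmin_r]).
    assert (h2a : Rabs (W k - s0) < r1) by (eapply Rlt_le_trans; [exact h2|apply Rmin_l]).
    assert (h2b : Rabs (W k - s0) < r2) by (eapply Rlt_le_trans; [exact h2|apply Rmin_r]).
    destruct (Hpp k) as [Hne Hdet].
    assert (Hneq : U k <> W k) by (intro E; apply Hne; rewrite E; auto).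
    destruct (G_trick (U k) (W k) Hneq) as [xi [Hxi Kxi]]; auto.
    { intros z Hz. apply Hdn; auto. apply (between_close (U k) (W k)); auto. }
    assert (Hxr : Rabs (xi - s0) < r2) by (apply (between_close (U k) (W k)); auto; lra).
    specialize (HK xi Hxr). rewrite Kxi in HK. replace (0 - curvature f s0) with (- curvature f s0) in HK by ring.
    rewrite Rabs_Ropp in HK. lra.
Qed.

End Diag.

Lemma unbounded_contra (a : nat -> R) : (forall k, INR k < Rabs (a k)) ->
  (exists B N, forall k, (N <= k)%nat -> Rabs (a k) <= B) -> False.
Proof.
  intros H [B [N HB]].
  destruct (archimed (Rabs B)) as [Hu _].
  set (k := max N (Z.to_nat (up (Rabs B)))).
  assert (Hk : IZR (up (Rabs B)) <= INR k).
  { destruct (Z_le_gt_dec 0 (up (Rabs B))) as [z|z].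
    - rewrite INR_IZR_INZ. apply IZR_le. assert (Z.of_nat (Z.to_nat (up (Rabs B))) <= Z.of_nat k)%Z by lia.
      rewrite Z2Nat.id in H0; auto.
    - assert (IZR (up (Rabs B)) < 0) by (apply IZR_lt; lia). generalize (pos_INR k). lra. }
  specialize (H k). specialize (HB k ltac:(lia)). generalize (Rle_abs B). lra.
Qed.

Section GlobCurve.
Variable f : curve.
Hypothesis Hg : generic f.
Let Hcl : closed_curve f := proj1 Hg.
Let Hsm : smooth_curve f := proj1 Hcl.
Let Hreg : regular f := proj1 (proj2 Hg).

Lemma Lq_P1 U l : Lq U l -> Lq (fun k => P1 f (U k)) (P1 f l).
Proof. intros; apply Lq_cont; auto. apply (Sm_cont _ _ (Sm_P1 f Hsm)); exact I. Qed.
Lemma Lq_P2 U l : Lq U l -> Lq (fun k => P2 f (U k)) (P2 f l).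
Proof. intros; apply Lq_cont; auto. apply (Sm_cont _ _ (Sm_P2 f Hsm)); exact I. Qed.
Lemma Lq_NR U l : Lq U l -> Lq (fun k => NR f (U k)) (NR f l).
Proof. intros; apply Lq_cont; auto. apply (Sm_cont _ _ (Sm_NR f Hsm Hreg)); exact I. Qed.
Lemma Lq_K U l : Lq U l -> Lq (fun k => curvature f (U k)) (curvature f l).
Proof. intros; apply Lq_cont; auto. apply (Sm_cont _ _ (Sm_K f Hsm Hreg)); exact I. Qed.

Lemma Lq_det U V l1 l2 : Lq U l1 -> Lq V l2 ->
  Lq (fun k => det (d1 f (U k)) (d1 f (V k))) (det (d1 f l1) (d1 f l2)).
Proof.
  intros H1 H2. apply (Lq_ext (fun k => P1 f (U k) * P2 f (V k) - P2 f (U k) * P1 f (V k))).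
  intros; symmetry; apply det_d1. rewrite det_d1.
  apply Lq_minus; apply Lq_mult; auto using Lq_P1, Lq_P2.
Qed.

Lemma Lq_kg U V l1 l2 : Lq U l1 -> Lq V l2 ->
  Lq (fun k => kappa_g f (U k) (V k)) (kappa_g f l1 l2).
Proof.
  intros H1 H2. apply (Lq_ext (fun k => - ((P1 f (U k) * P1 f (V k) + P2 f (U k) * P2 f (V k)) / (NR f (U k) * NR f (V k))) * curvature f (V k))).
  intros; reflexivity. rewrite kappa_g_eq.
  apply Lq_mult. apply Lq_opp. apply Lq_div.
  apply Lq_plus; apply Lq_mult; auto using Lq_P1, Lq_P2.
  apply Lq_mult; auto using Lq_NR.
  apply Rmult_integral_contrapositive; split; apply Rgt_not_eq, NR_pos; auto.
  apply Lq_K; auto.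
Qed.

Lemma Lq_D U V l1 l2 : Lq U l1 -> Lq V l2 ->
  Lq (fun k => css_denom f (U k) (V k)) (css_denom f l1 l2).
Proof. intros H1 H2. unfold css_denom. apply Lq_plus. apply Lq_K; auto. apply Lq_kg; auto. Qed.

Lemma Lq_along_css u0 v0 U V l1 l2 : Lq U l1 -> Lq V l2 -> css_denom f l1 l2 <> 0 ->
  (forall k, css_denom f (U k) (V k) <> 0) ->
  Lq (fun k => along f u0 v0 (css_point f (U k) (V k))) (along f u0 v0 (css_point f l1 l2)).
Proof.
  intros H1 H2 HD HDk.
  apply (Lq_ext (fun k => (curvature f (U k) * along f u0 v0 (f (U k)) + kappa_g f (U k) (V k) * along f u0 v0 (f (V k)))
     / css_denom f (U k) (V k))).
  intros; symmetry; apply along_css; auto. rewrite along_css by auto.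
  apply Lq_div; auto. apply Lq_plus; apply Lq_mult.
  apply Lq_K; auto. apply (Lq_cont (fun s => along f u0 v0 (f s))); auto. apply along_f_cont; auto.
  apply Lq_kg; auto. apply (Lq_cont (fun s => along f u0 v0 (f s))); auto. apply along_f_cont; auto.
  apply Lq_D; auto.
Qed.

End GlobCurve.

Section Glob.
Variable f : curve.
Hypothesis Hg : generic f.
Let Hcl : closed_curve f := proj1 Hg.
Let Hsm : smooth_curve f := proj1 Hcl.
Let Hreg : regular f := proj1 (proj2 Hg).
Variables u0 v0 delta : R.
Variable tau : R -> R.
Hypothesis Has : asymptotic_pair f u0 v0.
Hypothesis Hbr : local_branch f u0 v0 delta tau.
Hypothesis HDd : Derive (fun s => css_denom f s (tau s)) u0 <> 0.

Let R0 := r0 f Hg u0 v0 delta tau Has Hbr HDd.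
Let goodx x := exists s, 0 < Rabs (s - u0) < R0 / 2 /\ x = css_point f s (tau s).

Lemma finish_A (S T : nat -> R) (x : nat -> pt) : Lq S u0 -> Lq T v0 ->
  (forall k, parallel_pair f (S k) (T k)) -> (forall k, css_denom f (S k) (T k) <> 0) ->
  (forall k, x k = css_point f (S k) (T k)) -> (forall k, ~ goodx (x k)) -> False.
Proof.
  intros LS LT Hpp HD Hx Hng.
  destruct (loc_unique f Hg u0 v0 delta tau Has Hbr) as [r [Hr Hu]].
  assert (HR0 : 0 < R0) by apply r0_pos.
  assert (He : 0 < Rmin r (R0 / 2)) by (apply Rmin_pos; lra).
  destruct (Lq_eps S u0 LS _ He) as [N1 HN1].
  destruct (Lq_eps T v0 LT _ He) as [N2 HN2].
  set (k := max N1 N2).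
  assert (h1 := HN1 k ltac:(lia)). assert (h2 := HN2 k ltac:(lia)).
  assert (h1a : Rabs (S k - u0) < r) by (eapply Rlt_le_trans; [exact h1|apply Rmin_l]).
  assert (h1b : Rabs (S k - u0) < R0 / 2) by (eapply Rlt_le_trans; [exact h1|apply Rmin_r]).
  assert (h2a : Rabs (T k - v0) < r) by (eapply Rlt_le_trans; [exact h2|apply Rmin_l]).
  assert (ET : T k = tau (S k)) by (apply Hu; auto; apply (Hpp k)).
  apply (Hng k). exists (S k). split; [split|]; auto.
  - apply Rabs_pos_lt. intro E. assert (ES : S k = u0) by lra.
    apply (HD k). rewrite ET, ES, (tau_u1 f u0 v0 delta tau Hbr). apply Has.
  - rewrite Hx, ET. reflexivity.
Qed.

Lemma shift01 x : 0 <= x + IZR (1 - up x) <= 1.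
Proof. destruct (archimed x) as [H1 H2]. rewrite minus_IZR. lra. Qed.

Lemma claimC : exists eta, 0 < eta /\ exists M0, forall x, CSS f x ->
  Rabs (across f u0 v0 x) < eta -> M0 < Rabs (along f u0 v0 x) -> goodx x.
Proof.
  apply NNPP. intro Hn.
  assert (Hbad : forall n : nat, exists p : R * R, parallel_pair f (fst p) (snd p) /\
     css_denom f (fst p) (snd p) <> 0 /\
     Rabs (across f u0 v0 (css_point f (fst p) (snd p))) < / (INR n + 1) /\
     INR n < Rabs (along f u0 v0 (css_point f (fst p) (snd p))) /\ ~ goodx (css_point f (fst p) (snd p))).
  { intros n. apply NNPP. intro h. apply Hn. exists (/ (INR n + 1)). split.
    apply Rinv_0_lt_compat. generalize (pos_INR n); lra.
    exists (INR n). intros x [u [v [Hpp [HD Hx]]]] HY HX. apply NNPP. intro Hng. apply h.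
    exists (u, v). simpl. subst x. repeat split; auto; apply Hpp. }
  set (p := fun n => proj1_sig (constructive_indefinite_description _ (Hbad n))).
  assert (Hp : forall n, parallel_pair f (fst (p n)) (snd (p n)) /\
     css_denom f (fst (p n)) (snd (p n)) <> 0 /\
     Rabs (across f u0 v0 (css_point f (fst (p n)) (snd (p n)))) < / (INR n + 1) /\
     INR n < Rabs (along f u0 v0 (css_point f (fst (p n)) (snd (p n)))) /\ ~ goodx (css_point f (fst (p n)) (snd (p n)))).
  { intros n. apply (proj2_sig (constructive_indefinite_description _ (Hbad n))). }
  set (ku := fun n => (1 - up (fst (p n)))%Z).
  set (kv := fun n => (1 - up (snd (p n)))%Z).
  set (U := fun n => fst (p n) + IZR (ku n)).
  set (V := fun n => snd (p n) + IZR (kv n)).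
  assert (HUV : forall n, 0 <= U n <= 1 /\ 0 <= V n <= 1) by (intros; split; apply shift01).
  assert (HppU : forall n, parallel_pair f (U n) (V n)) by (intros; apply pp_shift; auto; apply Hp).
  assert (HDU : forall n, css_denom f (U n) (V n) <> 0) by (intros; unfold U, V; rewrite denom_shift; auto; apply Hp).
  assert (HxU : forall n, css_point f (U n) (V n) = css_point f (fst (p n)) (snd (p n)))
    by (intros; unfold U, V; apply point_shift; auto).
  destruct (extract2 U V HUV) as [phi [Hphi [l1 [l2 [Hl1 [Hl2 [L1 L2]]]]]]].
  set (U' := fun k => U (phi k)). set (V' := fun k => V (phi k)).
  set (x := fun k => css_point f (U' k) (V' k)).
  assert (Hpp' : forall k, parallel_pair f (U' k) (V' k)) by (intros; apply HppU).
  assert (HD' : forall k, css_denom f (U' k) (V' k) <> 0) by (intros; apply HDU).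
  assert (HX' : forall k, INR k < Rabs (along f u0 v0 (x k))).
  { intros k. unfold x, U', V'. rewrite HxU. eapply Rle_lt_trans. apply le_INR, Hphi. apply Hp. }
  assert (HY' : forall k, Rabs (across f u0 v0 (x k)) < / (INR k + 1)).
  { intros k. unfold x, U', V'. rewrite HxU. eapply Rlt_le_trans. apply Hp.
    apply Rinv_le_contravar. generalize (pos_INR k); lra. generalize (le_INR _ _ (Hphi k)); lra. }
  assert (Hng' : forall k, ~ goodx (x k)).
  { intros k. unfold x, U', V'. rewrite HxU. apply Hp. }
  assert (LY : Lq (fun k => across f u0 v0 (x k)) 0).
  { apply Lq_of_eps. intros e He. destruct (archimed_cor1 e He) as [N [HN1 HN2]].
    exists N. intros n Hnn. rewrite Rminus_0_r. eapply Rlt_trans. apply HY'.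
    eapply Rle_lt_trans; [|exact HN1]. apply Rinv_le_contravar. apply lt_0_INR; lia.
    generalize (le_INR _ _ Hnn); lra. }
  assert (Hal : det (d1 f l1) (d1 f l2) = 0).
  { apply (Lq_const_eq (fun k => det (d1 f (U' k)) (d1 f (V' k)))). intros; apply Hpp'.
    apply Lq_det; auto. }
  assert (Hbe : css_denom f l1 l2 = 0).
  { apply NNPP. intro HDl. apply (unbounded_contra (fun k => along f u0 v0 (x k)) HX').
    destruct (Lq_bounded _ _ (Lq_along_css f Hg u0 v0 U' V' l1 l2 L1 L2 HDl HD')) as [N HN].
    eexists; exists N; exact HN. }
  destruct (classic (f l1 = f l2)) as [Hfe|Hfe].
  - destruct (classic (same_param l1 l2)) as [[m Hm]|Hsp].
    +
      set (W := fun k => V' k - IZR m).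
      assert (LW : Lq W l1).
      { unfold W. eapply Lq_val. apply Lq_minus. exact L2. apply Lq_const. rewrite Hm. ring. }
      assert (EW : forall k, V' k = W k + IZR m) by (intros; unfold W; ring).
      assert (HppW : forall k, parallel_pair f (U' k) (W k)).
      { intros k. apply (pp_shift f Hcl 0 m). rewrite Rplus_0_r, <- EW. auto. }
      assert (HDW : forall k, css_denom f (U' k) (W k) <> 0).
      { intros k. rewrite <- (denom_shift f Hcl 0 m), Rplus_0_r, <- EW. auto. }
      apply (unbounded_contra (fun k => along f u0 v0 (x k)) HX').
      destruct (diag f Hg u0 v0 l1 U' W L1 LW HppW HDW) as [B [N HB]].
      exists B, N. intros k Hk.
      assert (Ex : css_point f (U' k) (V' k) = css_point f (U' k) (W k)).
      { rewrite <- (point_shift f Hcl 0 m (U' k) (W k)). f_equal. simpl; ring. apply EW. }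
      unfold x. rewrite Ex. apply HB; auto.
    + (* transversal self crossing *)
      apply (proj1 (proj2 (proj2 Hg)) l1 l2 Hsp Hfe Hal).
  -
    assert (Has' : asymptotic_pair f l1 l2) by (split; [split|]; auto).
    destruct (proj2 (proj2 (proj2 (proj2 (proj2 (proj2 (proj2 Hg)))))) l1 l2 Has') as [d' [t' [Hbr' [HDd' _]]]].
    destruct (loc_unique f Hg l1 l2 d' t' Has' Hbr') as [r [Hr Hu]].
    destruct (Lq_eps U' l1 L1 r Hr) as [Na HNa].
    destruct (Lq_eps V' l2 L2 r Hr) as [Nb HNb].
    assert (Hbranch : forall n, (max Na Nb <= n)%nat -> V' n = t' (U' n)).
    { intros n Hn'. apply Hu. apply HNa; lia. apply HNb; lia. apply Hpp'. }
    assert (HUne : forall n, (max Na Nb <= n)%nat -> U' n <> l1).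
    { intros n Hn' E. apply (HD' n). rewrite (Hbranch n Hn'), E, (tau_u1 f l1 l2 d' t' Hbr'). apply Has'. }
    assert (LYs : Lq (fun k => across f l1 l2 (x k)) 0).
    { apply Lq_of_eps. intros e He.
      destruct (Y_to_0 f Hg l1 l2 d' t' Has' Hbr' HDd' e He) as [rho [Hrho HY]].
      destruct (Lq_eps U' l1 L1 rho Hrho) as [Nc HNc].
      exists (max (max Na Nb) Nc). intros n Hn'. rewrite Rminus_0_r.
      unfold x. rewrite (Hbranch n ltac:(lia)). apply HY. split.
      apply Rabs_pos_lt. intro E. apply (HUne n ltac:(lia)). lra.
      apply HNc. lia. }
    assert (Hne0 : f u0 <> f v0) by apply Has.
    destruct (linelim (f u0) (f v0) (f l1) (f l2) x Hne0 Hfe LY LYs HX') as [A1 A2].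
    assert (SL := same_line_of (f u0) (f v0) (f l1) (f l2) Hne0 Hfe A1 A2).
    destruct (proj1 (proj2 (proj2 (proj2 (proj2 (proj2 (proj2 Hg)))))) l1 l2 u0 v0 Has' Has SL)
      as [[[k1 E1] [k2 E2]]|[[k1 E1] [k2 E2]]].
    + apply (finish_A (fun k => U' k + IZR k1) (fun k => V' k + IZR k2) x).
      * eapply Lq_val. apply Lq_plus. exact L1. apply Lq_const. auto.
      * eapply Lq_val. apply Lq_plus. exact L2. apply Lq_const. auto.
      * intros k. apply pp_shift; auto.
      * intros k. rewrite denom_shift; auto.
      * intros k. unfold x. rewrite point_shift; auto.
      * exact Hng'.
    + apply (finish_A (fun k => V' k + IZR k2) (fun k => U' k + IZR k1) x).
      * eapply Lq_val. apply Lq_plus. exact L2. apply Lq_const. auto.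
      * eapply Lq_val. apply Lq_plus. exact L1. apply Lq_const. auto.
      * intros k. apply pp_shift; auto. apply pp_sym; auto.
      * intros k. rewrite denom_shift; auto.
        destruct (Hpp' k) as [_ Hdet].
        rewrite (denom_sym f Hsm Hreg (U' k) (V' k) Hdet).
        assert (S := sig_sq f Hsm Hreg (U' k) (V' k) Hdet).
        apply Rmult_integral_contrapositive. split; auto.
        intro E. assert (sig f (U' k) (V' k) = 0) by lra. rewrite H in S. lra.
      * intros k. unfold x. rewrite point_shift; auto.
        destruct (Hpp' k) as [_ Hdet]. symmetry. apply point_sym; auto.
      * exact Hng'.
Qed.


Hypothesis Hsc : forall s1 s2, u0 - delta < s1 < u0 -> u0 < s2 < u0 + delta ->
  branch_css_curv_num f tau s1 * branch_css_curv_num f tau s2 < 0.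

Lemma css_of_PN s : PN f Hg u0 v0 delta tau Has Hbr HDd s -> CSS f (css_point f s (tau s)).
Proof.
  intros HP. exists s, (tau s). split. apply (pp_branch f u0 v0 delta tau Hbr). apply (PN_UB f Hg u0 v0 delta tau Has Hbr HDd s HP).
  split. apply (PN_Dn_nz f Hg u0 v0 delta tau Has Hbr HDd s HP). reflexivity.
Qed.

Theorem main_local : exists eps : R, (eps = 1 \/ eps = -1) /\
  exists eta : R, 0 < eta /\
    (forall eta' : R, 0 < eta' -> exists M : R, forall x : pt,
        CSS f x -> Rabs (across f u0 v0 x) < eta -> M < Rabs (along f u0 v0 x) ->
        Rabs (across f u0 v0 x) < eta' /\
        0 < eps * along f u0 v0 x * across f u0 v0 x) /\
    (forall M eta' : R, 0 < eta' ->
        (exists x : pt, CSS f x /\ M < along f u0 v0 x /\ Rabs (across f u0 v0 x) < eta') /\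
        (exists x : pt, CSS f x /\ along f u0 v0 x < - M /\ Rabs (across f u0 v0 x) < eta')).
Proof.
  destruct claimC as [eta [Heta [M0 HC]]].
  exists (eps0 f u0 delta tau). split. apply eps0_pm.
  exists eta. split; auto. split.
  - intros eta' Heta'.
    destruct (Y_to_0 f Hg u0 v0 delta tau Has Hbr HDd eta' Heta') as [r1 [Hr1 HY]].
    assert (HR0 : 0 < R0) by apply r0_pos.
    set (rho := Rmin r1 (R0 / 2)).
    assert (Hrho : 0 < rho) by (apply Rmin_pos; lra).
    destruct (bound_away f Hg u0 v0 delta tau Has Hbr HDd rho Hrho) as [B HB].
    exists (Rmax M0 B). intros x Hx HYx HXx.
    destruct (HC x Hx HYx (Rle_lt_trans _ _ _ (Rmax_l M0 B) HXx)) as [s [[Hs0 Hs] Exs]].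
    assert (HP : PN f Hg u0 v0 delta tau Has Hbr HDd s).
    { split; auto. fold R0. lra. }
    subst x.
    assert (Hsr : Rabs (s - u0) < rho).
    { destruct (Rlt_or_le (Rabs (s - u0)) rho) as [h|h]; auto. exfalso.
      assert (Hb := HB s (conj h (Rlt_le _ _ Hs))). unfold Xf in Hb.
      generalize (Rmax_r M0 B). lra. }
    split.
    + apply HY. split; auto. eapply Rlt_le_trans. exact Hsr. apply Rmin_l.
    + apply (side_sign f Hg u0 v0 delta tau Has Hbr HDd Hsc s HP).
  - intros M eta' Heta'.
    destruct (ends f Hg u0 v0 delta tau Has Hbr HDd M eta' Heta') as [s1 [s2 [P1' [P2' [X1' [X2' [Y1' Y2']]]]]]].
    split.
    + exists (css_point f s1 (tau s1)). split. apply css_of_PN; auto. split; auto.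
    + exists (css_point f s2 (tau s2)). split. apply css_of_PN; auto. split; auto.
Qed.

End Glob.

Theorem proposition4p13 (f : curve) (u0 v0 : R) :
  generic f -> asymptotic_pair f u0 v0 ->
  exists eps : R, (eps = 1 \/ eps = -1) /\
  exists eta : R, 0 < eta /\
    (forall eta' : R, 0 < eta' -> exists M : R, forall x : pt,
        CSS f x -> Rabs (across f u0 v0 x) < eta -> M < Rabs (along f u0 v0 x) ->
        Rabs (across f u0 v0 x) < eta' /\
        0 < eps * along f u0 v0 x * across f u0 v0 x) /\
    (forall M eta' : R, 0 < eta' ->
        (exists x : pt, CSS f x /\ M < along f u0 v0 x /\ Rabs (across f u0 v0 x) < eta') /\
        (exists x : pt, CSS f x /\ along f u0 v0 x < - M /\ Rabs (across f u0 v0 x) < eta')).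
Proof.
  intros Hg Has.
  destruct (proj2 (proj2 (proj2 (proj2 (proj2 (proj2 (proj2 Hg)))))) u0 v0 Has) as [delta [tau [Hbr [HDd Hsc]]]].
  apply (main_local f Hg u0 v0 delta tau Has Hbr HDd Hsc).
Qed.
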